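(* Let $H$ be an arbitrary group and let $A$ and $B$ be isomorphic subgroups of $H$, with an isomorphism $\mu: A\to B$. Let $G=\langle H, t \mid t^{-1}at=\mu(a),\ a\in A\rangle$ be the HNN-extension of $H$ with associated subgroups $A$ and $B$. Then: (1) $G$ is weakly hyperbolic relative to $\{H\}$. (2) If $H$ is weakly hyperbolic relative to $\{A,B\}$, then $G$ is weakly hyperbolic relative to $\{A\}$.
   Context: Let $G$ be a group and $\mathcal H=\{H_1,\ldots,H_m\}$ a collection of subgroups of $G$. A subset $X\subset G$ is a relative generating set of $G$ with respect to $\mathcal H$ if $G$ is generated by $X\cup H_1\cup\cdots\cup H_m$. The relative Cayley graph of $G$ with respect to $\mathcal H$ (and $X$) is the Cayley graph of $G$ with respect to the generating set $X\cup H_1\cup\cdots\cup H_m$, with the combinatorial metric (every edge has length 1). $G$ is weakly hyperbolic relative to $\mathcal H$ if there exists a finite relative generating set $X$ of $G$ with respect to $\mathcal H$ such that the corresponding relative Cayley graph is a hyperbolic metric space (Gromov hyperbolic: geodesic triangles are uniformly $\delta$-thin). *)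

(* Defs.v *)
From Stdlib Require Import List.
Import ListNotations.

Set Implicit Arguments.
Set Maximal Implicit Insertion.

Record group := Group {
  gcar :> Type;
  gmul : gcar -> gcar -> gcar;
  gone : gcar;
  ginv : gcar -> gcar;
  gmulA : forall x y z, gmul x (gmul y z) = gmul (gmul x y) z;
  gmul1 : forall x, gmul gone x = x;
  gmulV : forall x, gmul (ginv x) x = gone
}.
Arguments gmul {g}.
Arguments gone {g}.
Arguments ginv {g}.

Definition is_subgroup {G : group} (P : G -> Prop) : Prop :=
  P gone /\ (forall x y, P x -> P y -> P (gmul x y)) /\ (forall x, P x -> P (ginv x)).

Definition is_hom {G K : group} (f : G -> K) : Prop :=
  forall x y, f (gmul x y) = gmul (f x) (f y).

Definition is_iso_between {H : group} (A B : H -> Prop) (mu : H -> H) : Prop :=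
  (forall a, A a -> B (mu a)) /\
  (forall a1 a2, A a1 -> A a2 -> mu (gmul a1 a2) = gmul (mu a1) (mu a2)) /\
  (forall a1 a2, A a1 -> A a2 -> mu a1 = mu a2 -> a1 = a2) /\
  (forall b, B b -> exists a, A a /\ mu a = b).

(* (G, i, t) is the HNN-extension  < H, t | t^-1 a t = mu(a), a in A >,
   characterized by the universal property of this presentation. *)
Definition is_HNN_extension {H : group} (A : H -> Prop) (mu : H -> H)
    {G : group} (i : H -> G) (t : G) : Prop :=
  is_hom i /\
  (forall a, A a -> gmul (gmul (ginv t) (i a)) t = i (mu a)) /\
  (forall (K : group) (f : H -> K) (s : K),
     is_hom f ->
     (forall a, A a -> gmul (gmul (ginv s) (f a)) s = f (mu a)) ->
     exists phi : G -> K,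
       (is_hom phi /\ (forall h, phi (i h) = f h) /\ phi t = s) /\
       (forall psi : G -> K,
          is_hom psi -> (forall h, psi (i h) = f h) -> psi t = s ->
          forall g, psi g = phi g)).

Definition generates {G : group} (S : G -> Prop) : Prop :=
  forall g : G, forall P : G -> Prop, is_subgroup P -> (forall s, S s -> P s) -> P g.

Definition cay_adj {G : group} (S : G -> Prop) (g h : G) : Prop :=
  S (gmul (ginv g) h) \/ S (gmul (ginv h) g).

Definition is_path {G : group} (S : G -> Prop) (n : nat) (p : nat -> G) (x y : G) : Prop :=
  p 0 = x /\ p n = y /\ forall k, k < n -> cay_adj S (p k) (p (Datatypes.S k)).

Definition walk {G : group} (S : G -> Prop) (n : nat) (x y : G) : Prop :=
  exists p, is_path S n p x y.

Definition dist_le {G : group} (S : G -> Prop) (k : nat) (x y : G) : Prop :=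
  exists m, m <= k /\ walk S m x y.

Definition is_geodesic {G : group} (S : G -> Prop) (n : nat) (p : nat -> G) (x y : G) : Prop :=
  is_path S n p x y /\ forall m, walk S m x y -> n <= m.

(* Gromov hyperbolicity of the Cayley graph: geodesic triangles are uniformly
   delta-thin (each side lies in the delta-neighbourhood of the other two). *)
Definition cayley_hyperbolic {G : group} (S : G -> Prop) : Prop :=
  exists delta : nat,
    forall (x y z : G) (n1 n2 n3 : nat) (p1 p2 p3 : nat -> G),
      is_geodesic S n1 p1 x y -> is_geodesic S n2 p2 y z -> is_geodesic S n3 p3 z x ->
      forall k, k <= n1 ->
        exists j, (j <= n2 /\ dist_le S delta (p1 k) (p2 j)) \/
                  (j <= n3 /\ dist_le S delta (p1 k) (p3 j)).

Definition rel_gen_set {G : group} (X : list G) (Hs : list (G -> Prop)) : G -> Prop :=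
  fun g => In g X \/ exists P, In P Hs /\ P g.

Definition weakly_rel_hyperbolic {G : group} (Hs : list (G -> Prop)) : Prop :=
  exists X : list G,
    generates (rel_gen_set X Hs) /\ cayley_hyperbolic (rel_gen_set X Hs).

Definition image {H G : group} (i : H -> G) (P : H -> Prop) : G -> Prop :=
  fun g => exists h, P h /\ i h = g.

(* Main.v *)
Require Import Defs.
From Stdlib Require Import List Lia PeanoNat Bool Classical ClassicalEpsilon ProofIrrelevance FunctionalExtensionality PropExtensionality.
Import ListNotations.

Notation "x ** y" := (gmul x y) (at level 40, left associativity).

Section GroupLemmas.
Context {G : group}.
Implicit Types x y z : G.

Lemma mulA x y z : x ** (y ** z) = x ** y ** z. Proof. apply gmulA. Qed.
Lemma mul1l x : gone ** x = x. Proof. apply gmul1. Qed.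
Lemma mulVl x : ginv x ** x = gone. Proof. apply gmulV. Qed.

Lemma mulVr x : x ** ginv x = gone.
Proof.
  rewrite <- (mul1l (x ** ginv x)).
  rewrite <- (mulVl (ginv x)) at 1.
  rewrite <- mulA. rewrite (mulA (ginv x) x (ginv x)). rewrite mulVl, mul1l. apply mulVl.
Qed.
Lemma mul1r x : x ** gone = x.
Proof. rewrite <- (mulVl x), mulA, mulVr, mul1l. reflexivity. Qed.
Lemma mulKl x y : ginv x ** (x ** y) = y.
Proof. rewrite mulA, mulVl, mul1l; reflexivity. Qed.
Lemma mulKl' x y : x ** (ginv x ** y) = y.
Proof. rewrite mulA, mulVr, mul1l; reflexivity. Qed.
Lemma mulKr x y : x ** y ** ginv y = x.
Proof. rewrite <- mulA, mulVr, mul1r; reflexivity. Qed.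
Lemma mulKr' x y : x ** ginv y ** y = x.
Proof. rewrite <- mulA, mulVl, mul1r; reflexivity. Qed.
Lemma mul_cancel_l x y z : x ** y = x ** z -> y = z.
Proof. intro H. rewrite <- (mulKl x y), H, mulKl. reflexivity. Qed.
Lemma mul_cancel_r x y z : y ** x = z ** x -> y = z.
Proof. intro H. rewrite <- (mulKr y x), H, mulKr. reflexivity. Qed.
Lemma inv_uniq x y : x ** y = gone -> y = ginv x.
Proof. intro H. apply (mul_cancel_l x). rewrite H, mulVr. reflexivity. Qed.
Lemma invK x : ginv (ginv x) = x.
Proof. symmetry. apply inv_uniq. apply mulVl. Qed.
Lemma inv1 : ginv (@gone G) = gone.
Proof. symmetry. apply inv_uniq. apply mul1l. Qed.
Lemma invM x y : ginv (x ** y) = ginv y ** ginv x.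
Proof. symmetry. apply inv_uniq. rewrite mulA, mulKr, mulVr. reflexivity. Qed.
Lemma solve_l x y z : x ** y = z -> y = ginv x ** z.
Proof. intro H. rewrite <- H, mulKl. reflexivity. Qed.
Lemma solve_r x y z : x ** y = z -> x = z ** ginv y.
Proof. intro H. rewrite <- H, mulKr. reflexivity. Qed.
Lemma inv_eq x y : ginv x = ginv y -> x = y.
Proof. intro H. rewrite <- (invK x), H, invK. reflexivity. Qed.
End GroupLemmas.

Lemma hom1 {G K : group} (f : G -> K) : is_hom f -> f gone = gone.
Proof.
  intro hf. apply (mul_cancel_l (f gone)). rewrite <- hf, mul1l, mul1r. reflexivity.
Qed.
Lemma homV {G K : group} (f : G -> K) : is_hom f -> forall x, f (ginv x) = ginv (f x).
Proof.
  intros hf x. apply inv_uniq. rewrite <- hf, mulVr. apply hom1; auto.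
Qed.

Lemma subgroup1 {G : group} (P : G -> Prop) : is_subgroup P -> P gone.
Proof. intros [h _]; exact h. Qed.
Lemma subgroupM {G : group} (P : G -> Prop) : is_subgroup P -> forall x y, P x -> P y -> P (x ** y).
Proof. intros [_ [h _]]; exact h. Qed.
Lemma subgroupV {G : group} (P : G -> Prop) : is_subgroup P -> forall x, P x -> P (ginv x).
Proof. intros [_ [_ h]]; exact h. Qed.
Lemma subgroupVM {G : group} (P : G -> Prop) : is_subgroup P -> forall x y, P x -> P y -> P (ginv x ** y).
Proof. intros hP x y hx hy. apply subgroupM; auto. apply subgroupV; auto. Qed.
Lemma subgroup_inv_iff {G : group} (P : G -> Prop) : is_subgroup P -> forall x, P (ginv x) -> P x.
Proof. intros hP x h. rewrite <- (invK x). apply subgroupV; auto. Qed.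


Lemma ex_min (P : nat -> Prop) : (exists n, P n) -> exists n, P n /\ forall m, P m -> n <= m.
Proof.
  intros [n Hn].
  assert (H : forall k, forall n, n <= k -> P n -> exists n, P n /\ forall m, P m -> n <= m).
  { induction k as [|k IH]; intros n0 Hle Hn0.
    - exists n0; split; auto. intros m _. lia.
    - destruct (classic (exists m, P m /\ m < n0)) as [[m [Pm Hm]]|Hno].
      + apply (IH m); auto; lia.
      + exists n0; split; auto. intros m Pm. destruct (Nat.lt_ge_cases m n0); auto.
        exfalso; apply Hno; eauto. }
  apply (H n n); auto.
Qed.

Lemma step_cross (P : nat -> Prop) a b : a <= b -> P a -> ~ P b ->
  exists k, a <= k < b /\ P k /\ ~ P (Datatypes.S k).
Proof.
  intros Hab. induction Hab as [|b Hab IH]; intros Pa Pb.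
  - contradiction.
  - destruct (classic (P b)) as [Pb'|Pb'].
    + exists b; repeat split; auto; lia.
    + destruct (IH Pa Pb') as [k [Hk1 Hk2]]. exists k; split; auto; lia.
Qed.

Section Graph.
Context {G : group} (Sg : G -> Prop).

Lemma adj_sym x y : cay_adj Sg x y -> cay_adj Sg y x.
Proof. unfold cay_adj; tauto. Qed.

Lemma adj_transl g x y : cay_adj Sg x y -> cay_adj Sg (g ** x) (g ** y).
Proof.
  unfold cay_adj. rewrite !invM, <- !mulA, !(mulA (ginv g) g), !mulVl, !mul1l. auto.
Qed.

Lemma walk0 x : walk Sg 0 x x.
Proof. exists (fun _ => x). repeat split; intros; lia. Qed.
Lemma walk0_eq x y : walk Sg 0 x y -> x = y.
Proof. intros [p [h0 [h1 _]]]. congruence. Qed.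
Lemma walk1 x y : cay_adj Sg x y -> walk Sg 1 x y.
Proof.
  intro h. exists (fun k => match k with 0 => x | _ => y end). repeat split.
  intros k hk. assert (k = 0) by lia; subst; auto.
Qed.
Lemma walk1_adj x y : walk Sg 1 x y -> cay_adj Sg x y.
Proof. intros [p [h0 [h1 h]]]. subst. apply h. lia. Qed.

Lemma path_rev n p x y : is_path Sg n p x y -> is_path Sg n (fun k => p (n - k)) y x.
Proof.
  intros [h0 [h1 h]]. repeat split.
  - rewrite Nat.sub_0_r; auto.
  - rewrite Nat.sub_diag; auto.
  - intros k hk. apply adj_sym. replace (n - k) with (Datatypes.S (n - Datatypes.S k)) by lia.
    apply h; lia.
Qed.
Lemma walk_rev n x y : walk Sg n x y -> walk Sg n y x.
Proof. intros [p hp]. eexists; apply path_rev; eauto. Qed.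

Definition pcat (m : nat) (p q : nat -> G) : nat -> G :=
  fun k => if Nat.leb k m then p k else q (k - m).

Lemma path_cat m n p q x y z : is_path Sg m p x y -> is_path Sg n q y z ->
  is_path Sg (m + n) (pcat m p q) x z.
Proof.
  intros [p0 [p1 hp]] [q0 [q1 hq]]. unfold pcat. repeat split.
  - simpl. auto.
  - destruct (Nat.leb_spec (m + n) m).
    + assert (n = 0) by lia. subst. rewrite Nat.add_0_r in *. congruence.
    + replace (m + n - m) with n by lia. auto.
  - intros k hk. destruct (Nat.leb_spec k m); destruct (Nat.leb_spec (Datatypes.S k) m).
    + apply hp; lia.
    + assert (k = m) by lia. subst k. replace (Datatypes.S m - m) with 1 by lia.
      rewrite p1, <- q0. apply hq. lia.
    + lia.
    + replace (Datatypes.S k - m) with (Datatypes.S (k - m)) by lia. apply hq; lia.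
Qed.
Lemma walk_cat m n x y z : walk Sg m x y -> walk Sg n y z -> walk Sg (m + n) x z.
Proof. intros [p hp] [q hq]. eexists; eapply path_cat; eauto. Qed.

Lemma path_sub n p x y a b : is_path Sg n p x y -> a <= b <= n ->
  is_path Sg (b - a) (fun k => p (a + k)) (p a) (p b).
Proof.
  intros [h0 [h1 h]] hab. repeat split.
  - rewrite Nat.add_0_r; auto.
  - f_equal; lia.
  - intros k hk. replace (a + Datatypes.S k) with (Datatypes.S (a + k)) by lia. apply h; lia.
Qed.
Lemma walk_sub n p x y a b : is_path Sg n p x y -> a <= b <= n -> walk Sg (b - a) (p a) (p b).
Proof. intros. eexists; eapply path_sub; eauto. Qed.

Lemma geo_path n p x y : is_geodesic Sg n p x y -> is_path Sg n p x y.
Proof. intros [h _]; auto. Qed.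

Lemma geo_sub_le n p x y a b m : is_geodesic Sg n p x y -> a <= b <= n ->
  walk Sg m (p a) (p b) -> b - a <= m.
Proof.
  intros [hp hmin] hab hw.
  assert (w1 : walk Sg (a - 0) (p 0) (p a)) by (eapply walk_sub; eauto; lia).
  assert (w2 : walk Sg (n - b) (p b) (p n)) by (eapply walk_sub; eauto; lia).
  destruct hp as [h0 [h1 _]]. rewrite h0 in w1. rewrite h1 in w2.
  pose proof (walk_cat _ _ _ _ _ (walk_cat _ _ _ _ _ w1 hw) w2) as W.
  apply hmin in W. lia.
Qed.

Lemma geo_sub n p x y a b : is_geodesic Sg n p x y -> a <= b <= n ->
  is_geodesic Sg (b - a) (fun k => p (a + k)) (p a) (p b).
Proof.
  intros hg hab. split.
  - eapply path_sub; eauto. apply geo_path in hg; eauto.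
  - intros m hw. eapply geo_sub_le; eauto.
Qed.

Lemma geo_rev n p x y : is_geodesic Sg n p x y -> is_geodesic Sg n (fun k => p (n - k)) y x.
Proof.
  intros [hp hmin]. split.
  - apply path_rev; auto.
  - intros m hw. apply hmin. apply walk_rev; auto.
Qed.

Lemma walk_transl g n x y : walk Sg n x y -> walk Sg n (g ** x) (g ** y).
Proof.
  intros [p [h0 [h1 h]]]. exists (fun k => g ** p k). repeat split; try congruence.
  intros k hk. apply adj_transl; auto.
Qed.

Lemma dist_le_refl x : dist_le Sg 0 x x.
Proof. exists 0; split; auto. apply walk0. Qed.
Lemma dist_le_mono a b x y : a <= b -> dist_le Sg a x y -> dist_le Sg b x y.
Proof. intros h [m [hm w]]. exists m; split; auto; lia. Qed.
Lemma dist_le_sym a x y : dist_le Sg a x y -> dist_le Sg a y x.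
Proof. intros [m [hm w]]. exists m; split; auto. apply walk_rev; auto. Qed.
Lemma dist_le_trans a b x y z : dist_le Sg a x y -> dist_le Sg b y z -> dist_le Sg (a + b) x z.
Proof.
  intros [m [hm w]] [m' [hm' w']]. exists (m + m'); split; [lia|]. eapply walk_cat; eauto.
Qed.
Lemma dist_le_walk n x y : walk Sg n x y -> dist_le Sg n x y.
Proof. intro h. exists n; split; auto. Qed.
Lemma dist_le_adj x y : cay_adj Sg x y -> dist_le Sg 1 x y.
Proof. intro h. apply dist_le_walk, walk1; auto. Qed.
Lemma dist_le_eq a x y : x = y -> dist_le Sg a x y.
Proof. intro; subst. apply (dist_le_mono 0); [lia|apply dist_le_refl]. Qed.

Lemma path_point_dist n p x y k : is_path Sg n p x y -> k <= n -> dist_le Sg k x (p k).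
Proof.
  intros hp hk. destruct hp as [h0 [h1 h]]. apply dist_le_walk.
  rewrite <- h0. pose proof (walk_sub n p x y 0 k) as W. rewrite Nat.sub_0_r in W.
  apply W; [repeat split; auto|lia].
Qed.

Lemma connected_of_generates : generates Sg -> forall x y, exists n, walk Sg n x y.
Proof.
  intros hgen.
  assert (H1 : forall g, exists n, walk Sg n gone g).
  { intro g. apply (hgen g (fun g => exists n, walk Sg n gone g)).
    - unfold is_subgroup; split; [|split].
      + exists 0; apply walk0.
      + intros a b [n wa] [m wb]. exists (n + m). eapply walk_cat; eauto.
        apply (walk_transl a) in wb. rewrite mul1r in wb. exact wb.
      + intros a [n wa]. exists n. apply (walk_transl (ginv a)) in wa.
        rewrite mul1r, mulVl in wa. apply walk_rev; auto.
    - intros s hs. exists 1. apply walk1. left. rewrite inv1, mul1l; auto. }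
  intros x y. destruct (H1 (ginv x ** y)) as [n w]. exists n.
  apply (walk_transl x) in w. rewrite mul1r, mulKl' in w. auto.
Qed.

Lemma geodesic_exists x y : (exists n, walk Sg n x y) -> exists n p, is_geodesic Sg n p x y.
Proof.
  intro h. destruct (ex_min (fun n => walk Sg n x y) h) as [n [[p hp] hmin]].
  exists n, p. split; auto.
Qed.

Lemma geo_dist_exact n p x y a b : is_geodesic Sg n p x y -> a <= b <= n ->
  forall c, dist_le Sg c (p a) (p b) -> b - a <= c.
Proof. intros hg hab c [m [hm w]]. pose proof (geo_sub_le _ _ _ _ _ _ _ hg hab w). lia. Qed.

End Graph.

Lemma walk_mono {G : group} (S1 S2 : G -> Prop) : (forall s, S1 s -> S2 s) ->
  forall n x y, walk S1 n x y -> walk S2 n x y.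
Proof.
  intros hs n x y [p [h0 [h1 h]]]. exists p. repeat split; auto.
  intros k hk. destruct (h k hk) as [a|a]; [left|right]; auto.
Qed.
Lemma dist_le_mono_S {G : group} (S1 S2 : G -> Prop) : (forall s, S1 s -> S2 s) ->
  forall n x y, dist_le S1 n x y -> dist_le S2 n x y.
Proof. intros hs n x y [m [hm w]]. exists m; split; auto. eapply walk_mono; eauto. Qed.

Lemma dist_lip {G : group} (S1 S2 : G -> Prop) c (h : forall s, S2 s -> dist_le S1 c gone s) :
  forall m x y, walk S2 m x y -> dist_le S1 (c * m) x y.
Proof.
  intros m x y [p [h0 [h1 hp]]].
  assert (Hk : forall k, k <= m -> dist_le S1 (c * k) x (p k)).
  { induction k as [|k IH]; intro hk.
    - rewrite Nat.mul_0_r, <- h0. apply dist_le_refl.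
    - assert (st : dist_le S1 c (p k) (p (Datatypes.S k))).
      { destruct (hp k ltac:(lia)) as [e|e].
        - apply h in e. destruct e as [mm [hm wm]]. exists mm. split; auto.
          apply (walk_transl S1 (p k)) in wm. rewrite mul1r, mulKl' in wm. auto.
        - apply h in e. destruct e as [mm [hm wm]]. apply dist_le_sym. exists mm. split; auto.
          apply (walk_transl S1 (p (Datatypes.S k))) in wm. rewrite mul1r, mulKl' in wm. auto. }
      replace (c * Datatypes.S k) with (c * k + c) by lia. eapply dist_le_trans; [apply IH; lia|exact st]. }
  rewrite <- h1. apply Hk. lia.
Qed.

Section Tree.
Context {E : Type} (e0 : E).

Definition prefix (p q : list E) := exists s, q = p ++ s.
Definition onGeo (a b v : list E) := (prefix v a \/ prefix v b) /\ forall c, prefix c a -> prefix c b -> prefix c v.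
Definition tstep (w w' : list E) := w = w' \/ (exists y, w' = w ++ [y]) \/ (exists y, w = w' ++ [y]).
Definition tadj (u v : list E) := (exists y, u = v ++ [y]) \/ (exists y, v = u ++ [y]).

Lemma prefix_refl p : prefix p p. Proof. exists []; rewrite app_nil_r; auto. Qed.
Lemma prefix_trans p q r : prefix p q -> prefix q r -> prefix p r.
Proof. intros [s1 ->] [s2 ->]. exists (s1 ++ s2). rewrite app_assoc; auto. Qed.
Lemma prefix_nil p : prefix [] p. Proof. exists p; auto. Qed.
Lemma prefix_app p s : prefix p (p ++ s). Proof. exists s; auto. Qed.
Lemma prefix_len p q : prefix p q -> length p <= length q.
Proof. intros [s ->]. rewrite length_app; lia. Qed.
Lemma prefix_antisym p q : prefix p q -> prefix q p -> p = q.
Proof.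
  intros [s1 H1] [s2 H2]. subst q. rewrite <- app_assoc in H2.
  assert (length (s1 ++ s2) = 0).
  { apply (f_equal (@length E)) in H2. rewrite length_app in H2. lia. }
  destruct s1; [rewrite app_nil_r; auto| simpl in H; lia].
Qed.
Lemma prefix_cons x p q : prefix (x :: p) (x :: q) <-> prefix p q.
Proof. split; intros [s H]; exists s; [injection H; auto| simpl; congruence]. Qed.

Lemma prefix_comparable p q w : prefix p w -> prefix q w -> prefix p q \/ prefix q p.
Proof.
  revert q w. induction p as [|a p IH]; intros q w hp hq.
  - left; apply prefix_nil.
  - destruct q as [|b q]; [right; apply prefix_nil|].
    destruct hp as [s1 H1]. destruct hq as [s2 H2]. subst w. simpl in H2. injection H2 as -> H2.
    destruct (IH q (p ++ s1)) as [h|h]; [apply prefix_app| exists s2; auto| |].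
    + left; apply prefix_cons; auto.
    + right; apply prefix_cons; auto.
Qed.

Lemma prefix_snoc q w y : prefix q (w ++ [y]) -> prefix q w \/ q = w ++ [y].
Proof.
  intros h. destruct (prefix_comparable q w (w ++ [y]) h (prefix_app _ _)) as [h1|h1]; auto.
  destruct h1 as [s ->]. destruct h as [s' H]. rewrite <- app_assoc in H.
  apply app_inv_head in H. destruct s as [|z s].
  - left. rewrite app_nil_r. apply prefix_refl.
  - right. simpl in H. destruct s; [simpl in H; injection H as ->; auto|].
    apply (f_equal (@length E)) in H. simpl in H. rewrite length_app in H. simpl in H. lia.
Qed.

Lemma prefix_next v c : prefix v c -> v <> c -> prefix (v ++ [nth (length v) c e0]) c.
Proof.
  intros [s ->] hne. destruct s as [|z s]; [rewrite app_nil_r in hne; congruence|].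
  rewrite app_nth2; [|lia]. rewrite Nat.sub_diag. simpl. exists s. rewrite <- app_assoc; auto.
Qed.

Lemma prefix_snoc_nth v x c : prefix (v ++ [x]) c -> nth (length v) c e0 = x.
Proof. intros [s ->]. rewrite <- app_assoc, app_nth2; [|lia]. rewrite Nat.sub_diag; auto. Qed.

Lemma prefix_snoc_not v x : ~ prefix (v ++ [x]) v.
Proof. intro h. apply prefix_len in h. rewrite length_app in h. simpl in h. lia. Qed.

Lemma snoc_inj (w1 w2 : list E) (y1 y2 : E) : w1 ++ [y1] = w2 ++ [y2] -> w1 = w2 /\ y1 = y2.
Proof. intro H. apply app_inj_tail in H. auto. Qed.

Lemma onGeo_sym a b v : onGeo a b v -> onGeo b a v.
Proof. intros [[h|h] h2]; split; auto. Qed.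

Lemma onGeo_l a b : onGeo a b a.
Proof. split; [left; apply prefix_refl| auto]. Qed.
Lemma onGeo_r a b : onGeo a b b.
Proof. split; [right; apply prefix_refl| auto]. Qed.

Lemma onGeo_self v u : onGeo v v u -> u = v.
Proof.
  intros [[h|h] h2]; apply prefix_antisym; auto; apply h2; apply prefix_refl.
Qed.

Lemma cross_in r x w w' : tstep w w' -> ~ prefix (r ++ [x]) w -> prefix (r ++ [x]) w' ->
  w = r /\ w' = r ++ [x].
Proof.
  intros [->|[[y ->]|[y ->]]] h1 h2.
  - contradiction.
  - destruct (prefix_snoc _ _ _ h2) as [h|h]; [contradiction|].
    apply snoc_inj in h. destruct h as [-> ->]; auto.
  - exfalso. apply h1. eapply prefix_trans; eauto. apply prefix_app.
Qed.
Lemma tstep_sym w w' : tstep w w' -> tstep w' w.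
Proof. unfold tstep; intros [h|[h|h]]; auto. Qed.
Lemma cross_out r x w w' : tstep w w' -> prefix (r ++ [x]) w -> ~ prefix (r ++ [x]) w' ->
  w = r ++ [x] /\ w' = r.
Proof. intros h h1 h2. apply tstep_sym in h. destruct (cross_in r x w' w h h2 h1); auto. Qed.

Lemma cross_in_eq q w w' : tstep w w' -> ~ prefix q w -> prefix q w' -> w' = q.
Proof.
  intros [->|[[y ->]|[y ->]]] h1 h2.
  - contradiction.
  - destruct (prefix_snoc _ _ _ h2) as [h|h]; [contradiction|auto].
  - exfalso. apply h1. eapply prefix_trans; eauto. apply prefix_app.
Qed.

Lemma cross_out_eq q w w' : tstep w w' -> prefix q w -> ~ prefix q w' -> w = q.
Proof.
  intros [->|[[y ->]|[y ->]]] h1 h2.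
  - contradiction.
  - exfalso. apply h2. eapply prefix_trans; eauto. apply prefix_app.
  - destruct (prefix_snoc _ _ _ h1) as [h|h]; [contradiction|auto].
Qed.

Section Seq.
Variable f : nat -> list E.
Variable n : nat.
Hypothesis hf : forall k, k < n -> tstep (f k) (f (Datatypes.S k)).

Lemma visit q : onGeo (f 0) (f n) q -> exists j, j <= n /\ f j = q.
Proof.
  intros [hq hc].
  destruct (classic (prefix q (f 0))) as [h0|h0]; destruct (classic (prefix q (f n))) as [hn|hn].
  -
    assert (Hq: forall c, prefix c (f 0) -> prefix c (f n) -> prefix c q) by auto.
    destruct (classic (q = f 0)) as [e|e]; [exists 0; split; auto; lia|].
    pose (x := nth (length q) (f 0) e0).
    assert (hx : prefix (q ++ [x]) (f 0)) by (apply prefix_next; auto).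
    assert (hxn : ~ prefix (q ++ [x]) (f n)).
    { intro h. apply (prefix_snoc_not q x). apply hc; auto. }
    destruct (step_cross (fun k => prefix (q ++ [x]) (f k)) 0 n) as [k [hk [h1 h2]]]; auto; [lia|].
    destruct (cross_out q x _ _ (hf k ltac:(lia)) h1 h2). exists (Datatypes.S k); split; auto; lia.
  - destruct (step_cross (fun k => prefix q (f k)) 0 n) as [k [hk [h1 h2]]]; auto; [lia|].
    exists k. split; [lia|].
    eapply cross_out_eq; eauto. apply hf; lia.
  - destruct (step_cross (fun k => ~ prefix q (f k)) 0 n) as [k [hk [h1 h2]]]; auto; [lia|].
    apply NNPP in h2. exists (Datatypes.S k). split; [lia|].
    eapply cross_in_eq; eauto. apply hf; lia.
  - destruct hq; contradiction.
Qed.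

Lemma separate u v q : ~ onGeo u v q -> exists r x,
  (prefix (r ++ [x]) q /\ ~ prefix (r ++ [x]) u /\ ~ prefix (r ++ [x]) v) \/
  (~ prefix (r ++ [x]) q /\ prefix (r ++ [x]) u /\ prefix (r ++ [x]) v).
Proof.
  intros hng.
  destruct (classic (prefix q u \/ prefix q v)) as [hq|hq].
  - assert (exists c, prefix c u /\ prefix c v /\ ~ prefix c q) as [c [cu [cv cq]]].
    { apply NNPP; intro hno. apply hng. split; auto. intros c h1 h2.
      apply NNPP; intro h3. apply hno. eauto. }
    assert (hqc : prefix q c /\ q <> c).
    { destruct hq as [hq|hq].
      - destruct (prefix_comparable q c u) as [h|h]; auto; [|contradiction].
        split; auto. intro; subst; apply cq, prefix_refl.
      - destruct (prefix_comparable q c v) as [h|h]; auto; [|contradiction].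
        split; auto. intro; subst; apply cq, prefix_refl. }
    destruct hqc as [hqc hne].
    exists q, (nth (length q) c e0). right. pose proof (prefix_next q c hqc hne) as hn.
    repeat split.
    + apply prefix_snoc_not.
    + eapply prefix_trans; eauto.
    + eapply prefix_trans; eauto.
  - assert (Hgen : forall q', ~ prefix q' u -> ~ prefix q' v -> exists r x,
       prefix (r ++ [x]) q' /\ ~ prefix (r ++ [x]) u /\ ~ prefix (r ++ [x]) v).
    { intro q'. induction q' as [|z q' IH] using rev_ind; intros h1 h2.
      - exfalso; apply h1, prefix_nil.
      - destruct (classic (prefix q' u \/ prefix q' v)) as [hh|hh].
        + exists q', z. repeat split; auto. apply prefix_refl.
        + destruct IH as [r [x [a [b c]]]]; [tauto|tauto|].
          exists r, x. repeat split; auto. eapply prefix_trans; eauto. apply prefix_app. }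
    destruct (Hgen q) as [r [x h]]; [tauto|tauto|]. exists r, x. left; auto.
Qed.

Lemma no_backtrack :
  (forall k1 k2 r x, k1 < k2 -> k2 < n ->
     (f k1 = r /\ f (Datatypes.S k1) = r ++ [x] /\ f k2 = r ++ [x] /\ f (Datatypes.S k2) = r) \/
     (f k1 = r ++ [x] /\ f (Datatypes.S k1) = r /\ f k2 = r /\ f (Datatypes.S k2) = r ++ [x]) -> False) ->
  forall k, k <= n -> onGeo (f 0) (f n) (f k).
Proof.
  intros HB k hk. apply NNPP; intro hng.
  destruct (separate _ _ _ hng) as [r [x [[a [b c]]|[a [b c]]]]].
  - destruct (step_cross (fun j => ~ prefix (r ++ [x]) (f j)) 0 k) as [k1 [hk1 [e1 e2]]]; auto; [lia|].
    apply NNPP in e2.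
    destruct (step_cross (fun j => prefix (r ++ [x]) (f j)) k n) as [k2 [hk2 [e3 e4]]]; auto.
    destruct (cross_in _ _ _ _ (hf k1 ltac:(lia)) e1 e2).
    destruct (cross_out _ _ _ _ (hf k2 ltac:(lia)) e3 e4).
    apply (HB k1 k2 r x); [lia|lia|]. left; auto.
  - destruct (step_cross (fun j => prefix (r ++ [x]) (f j)) 0 k) as [k1 [hk1 [e1 e2]]]; auto; [lia|].
    destruct (step_cross (fun j => ~ prefix (r ++ [x]) (f j)) k n) as [k2 [hk2 [e3 e4]]]; auto.
    apply NNPP in e4.
    destruct (cross_out _ _ _ _ (hf k1 ltac:(lia)) e1 e2).
    destruct (cross_in _ _ _ _ (hf k2 ltac:(lia)) e3 e4).
    apply (HB k1 k2 r x); [lia|lia|]. right; auto.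
Qed.
End Seq.

Definition dir (v a : list E) : option (option E) :=
  if excluded_middle_informative (v = a) then None
  else if excluded_middle_informative (prefix v a) then Some (Some (nth (length v) a e0))
  else Some None.

Lemma dir_None v a : dir v a = None <-> v = a.
Proof.
  unfold dir. destruct (excluded_middle_informative (v = a)); [tauto|].
  destruct (excluded_middle_informative (prefix v a)); split; intro; congruence.
Qed.
Lemma dir_up v a : v <> a -> ~ prefix v a -> dir v a = Some None.
Proof.
  intros h1 h2. unfold dir. destruct (excluded_middle_informative (v = a)); [tauto|].
  destruct (excluded_middle_informative (prefix v a)); tauto.
Qed.
Lemma dir_down v a x : prefix (v ++ [x]) a -> dir v a = Some (Some x).
Proof.
  intros h. unfold dir. destruct (excluded_middle_informative (v = a)).
  { subst. exfalso; eapply prefix_snoc_not; eauto. }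
  destruct (excluded_middle_informative (prefix v a)).
  - f_equal; f_equal. apply prefix_snoc_nth; auto.
  - exfalso. apply n0. eapply prefix_trans; [apply prefix_app|eauto].
Qed.
Lemma dir_cases v a : v = a \/ (v <> a /\ ~ prefix v a /\ dir v a = Some None) \/
  (exists x, prefix (v ++ [x]) a /\ dir v a = Some (Some x)).
Proof.
  destruct (classic (v = a)) as [h|h]; auto.
  destruct (classic (prefix v a)) as [h2|h2].
  - right; right. exists (nth (length v) a e0). split; [apply prefix_next; auto|].
    apply dir_down, prefix_next; auto.
  - right; left. repeat split; auto. apply dir_up; auto.
Qed.

Lemma onGeo_dir a b v : onGeo a b v <-> (v = a \/ v = b \/ dir v a <> dir v b).
Proof.
  split.
  - intros [h1 h2]. destruct (classic (v = a)); auto. destruct (classic (v = b)); auto.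
    right; right. intro he.
    destruct (dir_cases v a) as [?|[[_ [na da]]|[x [pa da]]]]; [contradiction| |].
    + destruct (dir_cases v b) as [?|[[_ [nb db]]|[y [pb db]]]]; [contradiction| |congruence].
      destruct h1; contradiction.
    + destruct (dir_cases v b) as [?|[[_ [nb db]]|[y [pb db]]]]; [contradiction|congruence|].
      rewrite da, db in he. injection he as <-.
      apply (prefix_snoc_not v x). apply h2; auto.
  - intros [->|[->|hd]]; [apply onGeo_l|apply onGeo_r|].
    destruct (dir_cases v a) as [->|[[na [nna da]]|[x [pa da]]]].
    + apply onGeo_l.
    + destruct (dir_cases v b) as [->|[[nb [nnb db]]|[y [pb db]]]]; [apply onGeo_r|congruence|].
      assert (pvb : prefix v b) by (eapply prefix_trans; [apply prefix_app|eauto]).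
      split; auto. intros c ca cb.
      destruct (prefix_comparable c v b) as [h|h]; auto.
      exfalso; apply nna. eapply prefix_trans; eauto.
    + assert (pva : prefix v a) by (eapply prefix_trans; [apply prefix_app|eauto]).
      split; auto. intros c ca cb.
      destruct (prefix_comparable c v a) as [h|h]; auto.
      destruct (classic (c = v)) as [->|cne]; [apply prefix_refl|].
      exfalso.
      assert (hvc : prefix (v ++ [nth (length v) c e0]) c) by (apply prefix_next; auto).
      rewrite (dir_down v a (nth (length v) c e0)) in hd; [|eapply prefix_trans; eauto].
      rewrite (dir_down v b (nth (length v) c e0)) in hd; [|eapply prefix_trans; eauto].
      auto.
Qed.

Lemma tripod X Y Z v : onGeo X Y v ->
  (onGeo Z X v /\ dir v Y = dir v Z /\ dir v Y <> None) \/
  (onGeo Y Z v /\ dir v X = dir v Z /\ dir v X <> None) \/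
  (onGeo Y Z v /\ onGeo Z X v).
Proof.
  intro h. apply onGeo_dir in h.
  destruct (classic (dir v Y = dir v Z /\ dir v Y <> None)) as [[e1 e2]|n1].
  { left. split; auto. apply onGeo_dir.
    destruct h as [h|[h|h]]; auto.
    - apply dir_None in h. congruence.
    - right; right. congruence. }
  destruct (classic (dir v X = dir v Z /\ dir v X <> None)) as [[e1 e2]|n2].
  { right; left. split; auto. apply onGeo_dir.
    destruct h as [h|[h|h]]; auto.
    - apply dir_None in h. congruence.
    - right; right. congruence. }
  right; right. split; apply onGeo_dir.
  - destruct (classic (dir v Y = dir v Z)) as [e|e]; auto.
    left. apply dir_None. apply NNPP; intro; apply n1; split; auto.
  - destruct (classic (dir v Z = dir v X)) as [e|e]; auto.
    right; left. apply dir_None. apply NNPP; intro; apply n2; split; auto.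
Qed.

Lemma tripod1 X Y Z v : onGeo X Y v -> onGeo Y Z v \/ onGeo Z X v.
Proof. intro h. destruct (tripod X Y Z v h) as [[h1 _]|[[h1 _]|[h1 _]]]; auto. Qed.

Lemma neighbor a b v u u' : tadj u v -> onGeo a v u -> tadj u' v -> onGeo b v u' ->
  dir v a = dir v b -> u = u'.
Proof.
  intros ha hu hb hu' hd.
  assert (Hd : forall c w, tadj w v -> onGeo c v w ->
            (exists y, w = v ++ [y] /\ dir v c = Some (Some y)) \/
            (exists y, v = w ++ [y] /\ dir v c = Some None)).
  { intros c w [[y ->]|[y ->]] [h1 h2].
    - left. exists y. split; auto. apply dir_down.
      destruct h1 as [h1|h1]; auto. exfalso; eapply prefix_snoc_not; eauto.
    - right. exists y. split; auto. apply dir_up.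
      + intro ee. subst c. apply (prefix_snoc_not w y). apply h2; [apply prefix_refl|apply prefix_refl].
      + intro hp. apply (prefix_snoc_not w y). apply h2; auto. apply prefix_refl. }
  destruct (Hd a u ha hu) as [[y [-> d1]]|[y [e1 d1]]];
  destruct (Hd b u' hb hu') as [[y' [-> d2]]|[y' [e2 d2]]]; try congruence.
  rewrite e1 in e2. apply snoc_inj in e2. tauto.
Qed.

End Tree.

Definition thin {K : group} (SH : K -> Prop) (delta : nat) : Prop :=
    forall (x y z : K) (n1 n2 n3 : nat) (p1 p2 p3 : nat -> K),
      is_geodesic SH n1 p1 x y -> is_geodesic SH n2 p2 y z -> is_geodesic SH n3 p3 z x ->
      forall k, k <= n1 ->
        exists j, (j <= n2 /\ dist_le SH delta (p1 k) (p2 j)) \/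
                  (j <= n3 /\ dist_le SH delta (p1 k) (p3 j)).

Lemma hyp_thin {K : group} (SH : K -> Prop) : cayley_hyperbolic SH -> exists d, thin SH d.
Proof. intros [d h]. exists d. exact h. Qed.
Lemma thin_hyp {K : group} (SH : K -> Prop) d : thin SH d -> cayley_hyperbolic SH.
Proof. intros h. exists d. exact h. Qed.

Section HypLemmas.
Context {K : group} (SH : K -> Prop) (d : nat) (hyp : thin SH d)
  (conn : forall u w, exists n, walk SH n u w).

Lemma geo_ex u w : exists n p, is_geodesic SH n p u w.
Proof. apply geodesic_exists, conn. Qed.

Lemma geo_short n p u w : is_geodesic SH n p u w -> dist_le SH 1 u w -> n <= 1.
Proof. intros [_ hmin] [m [hm wm]]. apply hmin in wm. lia. Qed.

Lemma near_start n p u w j : is_geodesic SH n p u w -> j <= n -> dist_le SH j u (p j).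
Proof. intros hg hj. eapply path_point_dist; eauto. apply geo_path in hg; eauto. Qed.

Lemma quad l1 s e1 f1 l2 s' e2 f2 :
  is_geodesic SH l1 s e1 f1 -> is_geodesic SH l2 s' e2 f2 ->
  dist_le SH 1 e1 f2 -> dist_le SH 1 f1 e2 ->
  forall k, k <= l1 -> exists j, j <= l2 /\ dist_le SH (2 * d + 1) (s k) (s' j).
Proof.
  intros g1 g2 d1 d2 k hk.
  destruct (geo_ex f1 f2) as [mb [b gb]].
  destruct (geo_ex f2 e1) as [mc [c gc]].
  assert (hmc : mc <= 1) by (eapply geo_short; eauto; apply dist_le_sym; auto).
  destruct (hyp _ _ _ _ _ _ _ _ _ g1 gb gc k hk) as [j [[hj dj]|[hj dj]]].
  - destruct (geo_ex e2 f1) as [mc' [c' gc']].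
    assert (hmc' : mc' <= 1) by (eapply geo_short; eauto; apply dist_le_sym; auto).
    pose proof (geo_rev _ _ _ _ _ g2) as g2r.
    destruct (hyp _ _ _ _ _ _ _ _ _ gb g2r gc' j hj) as [j' [[hj' dj']|[hj' dj']]].
    + exists (l2 - j'). split; [lia|]. eapply dist_le_mono; [|eapply dist_le_trans; eauto]. lia.
    + exists 0. split; [lia|].
      assert (e : s' 0 = e2) by (destruct g2 as [[h0 _] _]; auto).
      rewrite e. pose proof (near_start _ _ _ _ j' gc' hj') as dn.
      eapply dist_le_mono; [|eapply dist_le_trans; [eauto|eapply dist_le_trans; [eauto|apply dist_le_sym; eauto]]].
      lia.
  - exists l2. split; [lia|].
    assert (e : s' l2 = f2) by (destruct g2 as [[_ [h1 _]] _]; auto).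
    rewrite e. pose proof (near_start _ _ _ _ j gc hj) as dn.
    eapply dist_le_mono; [|eapply dist_le_trans; [eauto|apply dist_le_sym; eauto]]. lia.
Qed.

Lemma hexagon l1 s1 e1 f1 l2 s2 e2 f2 l3 s3 e3 f3 :
  is_geodesic SH l1 s1 e1 f1 -> is_geodesic SH l2 s2 e2 f2 -> is_geodesic SH l3 s3 e3 f3 ->
  dist_le SH 1 f1 e2 -> dist_le SH 1 f2 e3 -> dist_le SH 1 f3 e1 ->
  forall k, k <= l1 -> exists j, (j <= l2 /\ dist_le SH (5 * d + 2) (s1 k) (s2 j)) \/
                               (j <= l3 /\ dist_le SH (5 * d + 2) (s1 k) (s3 j)).
Proof.
  intros g1 g2 g3 d12 d23 d31 k hk.
  assert (s2_0 : s2 0 = e2) by (destruct g2 as [[h0 _] _]; auto).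
  assert (s3_l : s3 l3 = f3) by (destruct g3 as [[_ [h1 _]] _]; auto).
  destruct (geo_ex f1 f3) as [ma [a ga]].
  destruct (geo_ex f3 e1) as [mc [c gc]].
  assert (hmc : mc <= 1) by (eapply geo_short; eauto).
  destruct (hyp _ _ _ _ _ _ _ _ _ g1 ga gc k hk) as [j [[hj dj]|[hj dj]]].
  2:{ exists l3. right. split; [lia|]. rewrite s3_l.
      pose proof (near_start _ _ _ _ j gc hj) as dn.
      eapply dist_le_mono; [|eapply dist_le_trans; [eauto|apply dist_le_sym; eauto]]. lia. }
  destruct (geo_ex f3 e2) as [mz [z gz]].
  destruct (geo_ex e2 f1) as [mc2 [c2 gc2]].
  assert (hmc2 : mc2 <= 1) by (eapply geo_short; eauto; apply dist_le_sym; auto).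
  destruct (hyp _ _ _ _ _ _ _ _ _ ga gz gc2 j hj) as [j' [[hj' dj']|[hj' dj']]].
  2:{ exists 0. left. split; [lia|]. rewrite s2_0.
      pose proof (near_start _ _ _ _ j' gc2 hj') as dn.
      eapply dist_le_mono; [|eapply dist_le_trans; [eauto|eapply dist_le_trans; [eauto|apply dist_le_sym; eauto]]].
      lia. }
  destruct (geo_ex f2 f3) as [me [eta ge]].
  destruct (hyp _ _ _ _ _ _ _ _ _ gz g2 ge j' hj') as [j'' [[hj'' dj'']|[hj'' dj'']]].
  - exists j''. left. split; auto.
    eapply dist_le_mono; [|eapply dist_le_trans; [eauto|eapply dist_le_trans; eauto]]. lia.
  - pose proof (geo_rev _ _ _ _ _ g3) as g3r.
    destruct (quad _ _ _ _ _ _ _ _ ge g3r d23 (dist_le_mono _ 0 1 _ _ ltac:(lia) (dist_le_refl _ _)) j'' hj'') as [j3 [hj3 dj3]].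
    exists (l3 - j3). right. split; [lia|].
    eapply dist_le_mono; [|eapply dist_le_trans; [eauto|eapply dist_le_trans; [eauto|eapply dist_le_trans; eauto]]].
    lia.
Qed.
End HypLemmas.

Section TreeGeo.
Context {G : group} (Sg : G -> Prop) {E : Type} (e0 : E) (pi : G -> list E).
Context (E1 : forall g g', cay_adj Sg g g' -> tstep (pi g) (pi g')).

Lemma path_visit n p x y q : is_path Sg n p x y -> onGeo (pi x) (pi y) q ->
  exists j, j <= n /\ pi (p j) = q.
Proof.
  intros [h0 [h1 h]] hq. subst x y.
  apply (visit e0 (fun k => pi (p k)) n); auto.
Qed.

Context (E2 : forall g1 g1' g2 g2' r x, cay_adj Sg g1 g1' -> cay_adj Sg g2 g2' ->
  pi g1 = r -> pi g2 = r -> pi g1' = r ++ [x] -> pi g2' = r ++ [x] ->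
  dist_le Sg 1 g1 g2 /\ dist_le Sg 1 g1' g2').

Lemma geo_onGeo n p x y k : is_geodesic Sg n p x y -> k <= n -> onGeo (pi x) (pi y) (pi (p k)).
Proof.
  intros hg hk. pose proof (geo_path _ _ _ _ _ hg) as [h0 [h1 h]].
  rewrite <- h0, <- h1.
  apply (no_backtrack e0 (fun k => pi (p k)) n); auto.
  intros k1 k2 r x0 hk12 hk2n HH.
  assert (a1 : cay_adj Sg (p k1) (p (Datatypes.S k1))) by (apply h; lia).
  assert (a2 : cay_adj Sg (p k2) (p (Datatypes.S k2))) by (apply h; lia).
  destruct HH as [[a [b [c d]]]|[a [b [c d]]]].
  - destruct (E2 (p k1) (p (Datatypes.S k1)) (p (Datatypes.S k2)) (p k2) r x0 a1 (adj_sym _ _ _ a2) a d b c) as [D _].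
    pose proof (geo_dist_exact _ _ _ _ _ k1 (Datatypes.S k2) hg ltac:(lia) 1 D). lia.
  - destruct (E2 (p (Datatypes.S k1)) (p k1) (p k2) (p (Datatypes.S k2)) r x0 (adj_sym _ _ _ a1) a2 b c a d) as [_ D].
    pose proof (geo_dist_exact _ _ _ _ _ k1 (Datatypes.S k2) hg ltac:(lia) 1 D). lia.
Qed.
End TreeGeo.

Section Part1Geo.
Context {G : group} (Sg : G -> Prop) {E : Type} (e0 : E) (pi : G -> list E).
Context (E1 : forall g g', cay_adj Sg g g' -> tstep (pi g) (pi g')).
Context (F1 : forall g g', pi g = pi g' -> dist_le Sg 1 g g').

Lemma hyp_part1 : cayley_hyperbolic Sg.
Proof.
  exists 1. intros x y z n1 n2 n3 p1 p2 p3 g1 g2 g3 k hk.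
  assert (E2 : forall g1 g1' g2 g2' r x, cay_adj Sg g1 g1' -> cay_adj Sg g2 g2' ->
    pi g1 = r -> pi g2 = r -> pi g1' = r ++ [x] -> pi g2' = r ++ [x] ->
    dist_le Sg 1 g1 g2 /\ dist_le Sg 1 g1' g2').
  { intros. split; apply F1; congruence. }
  pose proof (geo_onGeo Sg e0 pi E1 E2 _ _ _ _ k g1 hk) as hv.
  destruct (tripod1 e0 _ _ (pi z) _ hv) as [hv'|hv'].
  - destruct (path_visit Sg e0 pi E1 n2 p2 y z _ (geo_path _ _ _ _ _ g2) hv') as [j [hj ej]].
    exists j. left. split; auto.
  - destruct (path_visit Sg e0 pi E1 n3 p3 z x _ (geo_path _ _ _ _ _ g3) hv') as [j [hj ej]].
    exists j. right. split; auto.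
Qed.
End Part1Geo.

Lemma seq_block {T : Type} (f : nat -> T) n k : k <= n -> exists a b, a <= k <= b /\ b <= n /\
  (forall j, a <= j <= b -> f j = f k) /\ (a = 0 \/ f (a - 1) <> f k) /\ (b = n \/ f (Datatypes.S b) <> f k).
Proof.
  intro hk.
  destruct (ex_min (fun d => k + d <= n /\ (k + d = n \/ f (Datatypes.S (k + d)) <> f k))) as [db [[hb1 hb2] hbmin]].
  { exists (n - k). split; [lia|left; lia]. }
  destruct (ex_min (fun d => d <= k /\ (k - d = 0 \/ f (k - d - 1) <> f k))) as [da [[ha1 ha2] hamin]].
  { exists k. split; [lia|left; lia]. }
  exists (k - da), (k + db). repeat split; try lia.
  - assert (Hb : forall d', d' <= db -> f (k + d') = f k).
    { induction d' as [|d' IH]; intro hd. { rewrite Nat.add_0_r; auto. }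
      assert (~ (k + d' <= n /\ (k + d' = n \/ f (Datatypes.S (k + d')) <> f k))) as hn.
      { intro hh. apply hbmin in hh. lia. }
      replace (k + Datatypes.S d') with (Datatypes.S (k + d')) by lia.
      apply NNPP. intro hne. apply hn. split; [lia|right; auto]. }
    assert (Ha : forall d', d' <= da -> f (k - d') = f k).
    { induction d' as [|d' IH]; intro hd. { rewrite Nat.sub_0_r; auto. }
      assert (~ (d' <= k /\ (k - d' = 0 \/ f (k - d' - 1) <> f k))) as hn.
      { intro hh. apply hamin in hh. lia. }
      replace (k - Datatypes.S d') with (k - d' - 1) by lia.
      apply NNPP. intro hne. apply hn. split; [lia|right; auto]. }
    intros j hj. destruct (Nat.le_ge_cases j k).
    + replace j with (k - (k - j)) by lia. apply Ha. lia.
    + replace j with (k + (j - k)) by lia. apply Hb. lia.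
  - destruct ha2 as [h|h]; [left; lia|right]. replace (k - da - 1) with (k - da - 1) by lia. auto.
  - destruct hb2 as [h|h]; [left; lia|right]. auto.
Qed.

Lemma tstep_tadj {E : Type} (u v : list E) : tstep u v -> u <> v -> tadj u v.
Proof. intros [h|[[y h]|[y h]]] hne; [contradiction|right|left]; eauto. Qed.

Lemma tadj_neq {E : Type} (u v : list E) : tadj u v -> u <> v.
Proof.
  intros [[y ->]|[y ->]] e.
  - apply (f_equal (@length E)) in e. rewrite length_app in e; simpl in e; lia.
  - apply (f_equal (@length E)) in e. rewrite length_app in e; simpl in e; lia.
Qed.

Section Part2Geo.
Context {G : group} (Sg : G -> Prop) {E : Type} (e0 : E) (pi : G -> list E).
Context (E1 : forall g g', cay_adj Sg g g' -> tstep (pi g) (pi g')).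
Context (E2 : forall g1 g1' g2 g2' r x, cay_adj Sg g1 g1' -> cay_adj Sg g2 g2' ->
  pi g1 = r -> pi g2 = r -> pi g1' = r ++ [x] -> pi g2' = r ++ [x] ->
  dist_le Sg 1 g1 g2 /\ dist_le Sg 1 g1' g2').
Context {Hh : group} (SH : Hh -> Prop) (coord : G -> Hh) (dH : nat) (hypH : thin SH dH)
  (connH : forall u w, exists n, walk SH n u w).
Context (F2a : forall g g' k, pi g = pi g' -> dist_le SH k (coord g) (coord g') -> dist_le Sg k g g').
Context (F2b : forall g g', pi g = pi g' -> cay_adj Sg g g' -> cay_adj SH (coord g) (coord g')).

Definition isBlock (p : nat -> G) n v a b :=
  a <= b /\ b <= n /\ (forall j, a <= j <= b -> pi (p j) = v) /\
  (a = 0 \/ pi (p (a - 1)) <> v) /\ (b = n \/ pi (p (Datatypes.S b)) <> v).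

Lemma block_ex p n k : k <= n -> exists a b, a <= k <= b /\ isBlock p n (pi (p k)) a b.
Proof.
  intro hk. destruct (seq_block (fun j => pi (p j)) n k hk) as [a [b [h1 [h2 [h3 [h4 h5]]]]]].
  exists a, b. split; auto. repeat split; auto; lia.
Qed.

Lemma block_entry n p x y v a b : is_geodesic Sg n p x y -> isBlock p n v a b -> 0 < a ->
  tadj (pi (p (a - 1))) v /\ onGeo (pi x) v (pi (p (a - 1))).
Proof.
  intros hg [hab [hbn [hin [ha hb]]]] ha0.
  destruct ha as [ha|ha]; [lia|].
  pose proof (geo_path _ _ _ _ _ hg) as [h0 [h1 h]].
  split.
  - apply tstep_tadj; auto. rewrite <- (hin a) by lia. apply E1.
    replace a with (Datatypes.S (a - 1)) at 2 by lia. apply h. lia.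
  - pose proof (geo_sub _ _ _ _ _ 0 a hg ltac:(lia)) as gs.
    pose proof (geo_onGeo Sg e0 pi E1 E2 _ _ _ _ (a - 1) gs ltac:(lia)) as o.
    simpl in o. rewrite h0, (hin a) in o by lia. auto.
Qed.

Lemma block_exit n p x y v a b : is_geodesic Sg n p x y -> isBlock p n v a b -> b < n ->
  tadj (pi (p (Datatypes.S b))) v /\ onGeo (pi y) v (pi (p (Datatypes.S b))).
Proof.
  intros hg [hab [hbn [hin [ha hb]]]] hbn'.
  destruct hb as [hb|hb]; [lia|].
  pose proof (geo_path _ _ _ _ _ hg) as [h0 [h1 h]].
  split.
  - apply tstep_tadj; auto. rewrite <- (hin b) by lia. apply tstep_sym, E1. apply h. lia.
  - pose proof (geo_sub _ _ _ _ _ b n hg ltac:(lia)) as gs.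
    pose proof (geo_onGeo Sg e0 pi E1 E2 _ _ _ _ 1 gs ltac:(lia)) as o.
    rewrite h1, (hin b) in o by lia. replace (b + 1) with (Datatypes.S b) in o by lia.
    apply onGeo_sym; exact o.
Qed.

Lemma block_start n p x y v a b : is_geodesic Sg n p x y -> isBlock p n v a b ->
  (a = 0 <-> v = pi x).
Proof.
  intros hg hB. pose proof hB as [hab [hbn [hin _]]].
  pose proof (geo_path _ _ _ _ _ hg) as [h0 [h1 h]].
  split.
  - intros ->. rewrite <- h0. symmetry. apply hin. lia.
  - intro e. destruct (Nat.eq_dec a 0) as [|ne]; auto. exfalso.
    destruct (block_entry _ _ _ _ _ _ _ hg hB ltac:(lia)) as [ta o]. rewrite <- e in o.
    apply onGeo_self in o. apply (tadj_neq _ _ ta o).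
Qed.

Lemma block_end n p x y v a b : is_geodesic Sg n p x y -> isBlock p n v a b ->
  (b = n <-> v = pi y).
Proof.
  intros hg hB. pose proof hB as [hab [hbn [hin _]]].
  pose proof (geo_path _ _ _ _ _ hg) as [h0 [h1 h]].
  split.
  - intros ->. rewrite <- h1. symmetry. apply hin. lia.
  - intro e. destruct (Nat.eq_dec b n) as [|ne]; auto. exfalso.
    destruct (block_exit _ _ _ _ _ _ _ hg hB ltac:(lia)) as [ta o]. rewrite <- e in o.
    apply onGeo_self in o. apply (tadj_neq _ _ ta o).
Qed.

Lemma pairing n p x y m q x' y' v a b a' b' :
  is_geodesic Sg n p x y -> isBlock p n v a b ->
  is_geodesic Sg m q x' y' -> isBlock q m v a' b' ->
  (x = y' \/ (dir e0 v (pi x) = dir e0 v (pi y') /\ dir e0 v (pi x) <> None)) ->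
  dist_le Sg 1 (p a) (q b').
Proof.
  intros gp bp gq bq hc.
  pose proof (block_start _ _ _ _ _ _ _ gp bp) as st.
  pose proof (block_end _ _ _ _ _ _ _ gq bq) as en.
  pose proof (geo_path _ _ _ _ _ gp) as [p0 [p1 hpp]].
  pose proof (geo_path _ _ _ _ _ gq) as [q0 [q1 hqq]].
  pose proof bp as [hab [hbn [inp _]]]. pose proof bq as [hab' [hbm [inq _]]].
  destruct (Nat.eq_dec a 0) as [ea|na]; destruct (Nat.eq_dec b' m) as [eb|nb].
  - subst a b'. rewrite p0, q1. destruct hc as [->|[hd hn]].
    + apply dist_le_eq; auto.
    + exfalso. apply hn. apply dir_None. apply st. auto.
  - exfalso. assert (v = pi x) by (apply st; auto).
    destruct hc as [->|[hd hn]].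
    + apply nb. apply en. auto.
    + apply hn. apply dir_None. auto.
  - exfalso. assert (v = pi y') by (apply en; auto).
    destruct hc as [->|[hd hn]].
    + apply na. apply st. auto.
    + apply hn. rewrite hd. apply dir_None. auto.
  - destruct (block_entry _ _ _ _ _ _ _ gp bp ltac:(lia)) as [ta oa].
    destruct (block_exit _ _ _ _ _ _ _ gq bq ltac:(lia)) as [tb ob].
    assert (hd : dir e0 v (pi x) = dir e0 v (pi y')) by (destruct hc as [->|[hd _]]; auto).
    pose proof (neighbor e0 _ _ _ _ _ ta oa tb ob hd) as eu.
    assert (adj1 : cay_adj Sg (p (a - 1)) (p a)).
    { replace a with (Datatypes.S (a - 1)) at 2 by lia. apply hpp. lia. }
    assert (adj2 : cay_adj Sg (q b') (q (Datatypes.S b'))) by (apply hqq; lia).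
    assert (epa : pi (p a) = v) by (apply inp; lia).
    assert (eqb : pi (q b') = v) by (apply inq; lia).
    destruct ta as [[y0 e1]|[y0 e1]].
    + destruct (E2 (p a) (p (a - 1)) (q b') (q (Datatypes.S b')) v y0 (adj_sym _ _ _ adj1) adj2 epa eqb e1)
        as [D _]; auto. congruence.
    + destruct (E2 (p (a - 1)) (p a) (q (Datatypes.S b')) (q b') (pi (p (a - 1))) y0 adj1 (adj_sym _ _ _ adj2))
        as [_ D]; auto; congruence.
Qed.

Lemma fiber_dist1 g g' : pi g = pi g' -> dist_le Sg 1 g g' -> dist_le SH 1 (coord g) (coord g').
Proof.
  intros e [m [hm w]]. destruct m as [|[|m]]; [| |lia].
  - apply walk0_eq in w. subst. apply dist_le_mono with 0; [lia|apply dist_le_refl].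
  - apply dist_le_adj. apply F2b; auto. apply walk1_adj; auto.
Qed.

Lemma fiber_geo n p x y v a b : is_geodesic Sg n p x y -> isBlock p n v a b ->
  is_geodesic SH (b - a) (fun j => coord (p (a + j))) (coord (p a)) (coord (p b)).
Proof.
  intros hg [hab [hbn [hin _]]]. pose proof (geo_path _ _ _ _ _ hg) as [h0 [h1 h]].
  split; [repeat split|].
  - rewrite Nat.add_0_r. auto.
  - f_equal. f_equal. lia.
  - intros k hk. replace (a + Datatypes.S k) with (Datatypes.S (a + k)) by lia.
    apply F2b; [rewrite !hin by lia; auto|]. apply h. lia.
  - intros m wm. apply dist_le_walk in wm. apply F2a in wm; [|rewrite !hin by lia; auto].
    eapply geo_dist_exact; eauto.
Qed.

Lemma hyp_part2 : thin Sg (5 * dH + 2).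
Proof.
  intros x y z n1 n2 n3 p1 p2 p3 g1 g2 g3 k hk.
  set (v := pi (p1 k)).
  pose proof (geo_onGeo Sg e0 pi E1 E2 _ _ _ _ k g1 hk) as hv. fold v in hv.
  destruct (block_ex p1 n1 k hk) as [a1 [b1 [hk1 B1]]]. fold v in B1.
  pose proof (fiber_geo _ _ _ _ _ _ _ g1 B1) as s1.
  pose proof B1 as [_ [_ [in1 _]]].
  assert (hidx : k = a1 + (k - a1)) by lia.
  assert (FT : forall l (q : nat -> G) j a, (forall j, a <= j <= a + l -> pi (q j) = v) -> j <= l ->
    forall c, dist_le SH c (coord (p1 k)) (coord (q (a + j))) -> dist_le Sg c (p1 k) (q (a + j))).
  { intros l q j a hin hj c dc. apply F2a; auto. rewrite hin by lia. auto. }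
  destruct (tripod e0 (pi x) (pi y) (pi z) v hv) as [[o [hd hn]]|[[o [hd hn]]|[o o']]].
  - destruct (path_visit Sg e0 pi E1 _ _ _ _ _ (geo_path _ _ _ _ _ g3) o) as [j0 [hj0 ej0]].
    destruct (block_ex p3 n3 j0 hj0) as [a3 [b3 [hk3 B3]]]. rewrite ej0 in B3.
    pose proof (fiber_geo _ _ _ _ _ _ _ g3 B3) as s3.
    pose proof B3 as [_ [hb3 [in3 _]]].
    pose proof (pairing _ _ _ _ _ _ _ _ _ _ _ _ _ g1 B1 g3 B3 (or_introl eq_refl)) as P1.
    pose proof (pairing _ _ _ _ _ _ _ _ _ _ _ _ _ g3 B3 g1 B1 (or_intror (conj (eq_sym hd) (fun e => hn (eq_trans hd e))))) as P2.
    apply fiber_dist1 in P1; [|rewrite in1, in3 by lia; auto].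
    apply fiber_dist1 in P2; [|rewrite in1, in3 by lia; auto].
    destruct (quad SH dH hypH connH _ _ _ _ _ _ _ _ s1 s3 P1 (dist_le_sym _ _ _ _ P2) (k - a1) ltac:(lia)) as [j [hj dj]].
    exists (a3 + j). right. split; [lia|]. rewrite <- hidx in dj.
    apply (FT (b3 - a3)); auto; [intros; apply in3; lia|].
    eapply dist_le_mono; [|exact dj]. lia.
  - destruct (path_visit Sg e0 pi E1 _ _ _ _ _ (geo_path _ _ _ _ _ g2) o) as [j0 [hj0 ej0]].
    destruct (block_ex p2 n2 j0 hj0) as [a2 [b2 [hk2 B2]]]. rewrite ej0 in B2.
    pose proof (fiber_geo _ _ _ _ _ _ _ g2 B2) as s2.
    pose proof B2 as [_ [hb2 [in2 _]]].
    pose proof (pairing _ _ _ _ _ _ _ _ _ _ _ _ _ g1 B1 g2 B2 (or_intror (conj hd hn))) as P1.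
    pose proof (pairing _ _ _ _ _ _ _ _ _ _ _ _ _ g2 B2 g1 B1 (or_introl eq_refl)) as P2.
    apply fiber_dist1 in P1; [|rewrite in1, in2 by lia; auto].
    apply fiber_dist1 in P2; [|rewrite in1, in2 by lia; auto].
    destruct (quad SH dH hypH connH _ _ _ _ _ _ _ _ s1 s2 P1 (dist_le_sym _ _ _ _ P2) (k - a1) ltac:(lia)) as [j [hj dj]].
    exists (a2 + j). left. split; [lia|]. rewrite <- hidx in dj.
    apply (FT (b2 - a2)); auto; [intros; apply in2; lia|].
    eapply dist_le_mono; [|exact dj]. lia.
  - destruct (path_visit Sg e0 pi E1 _ _ _ _ _ (geo_path _ _ _ _ _ g2) o) as [j0 [hj0 ej0]].
    destruct (block_ex p2 n2 j0 hj0) as [a2 [b2 [hk2 B2]]]. rewrite ej0 in B2.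
    pose proof (fiber_geo _ _ _ _ _ _ _ g2 B2) as s2.
    pose proof B2 as [_ [hb2 [in2 _]]].
    destruct (path_visit Sg e0 pi E1 _ _ _ _ _ (geo_path _ _ _ _ _ g3) o') as [j3 [hj3 ej3]].
    destruct (block_ex p3 n3 j3 hj3) as [a3 [b3 [hk3 B3]]]. rewrite ej3 in B3.
    pose proof (fiber_geo _ _ _ _ _ _ _ g3 B3) as s3.
    pose proof B3 as [_ [hb3 [in3 _]]].
    pose proof (pairing _ _ _ _ _ _ _ _ _ _ _ _ _ g2 B2 g1 B1 (or_introl eq_refl)) as P12.
    pose proof (pairing _ _ _ _ _ _ _ _ _ _ _ _ _ g3 B3 g2 B2 (or_introl eq_refl)) as P23.
    pose proof (pairing _ _ _ _ _ _ _ _ _ _ _ _ _ g1 B1 g3 B3 (or_introl eq_refl)) as P31.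
    apply fiber_dist1 in P12; [|rewrite in1, in2 by lia; auto].
    apply fiber_dist1 in P23; [|rewrite in2, in3 by lia; auto].
    apply fiber_dist1 in P31; [|rewrite in1, in3 by lia; auto].
    destruct (hexagon SH dH hypH connH _ _ _ _ _ _ _ _ _ _ _ _ s1 s2 s3
       (dist_le_sym _ _ _ _ P12) (dist_le_sym _ _ _ _ P23) (dist_le_sym _ _ _ _ P31) (k - a1) ltac:(lia))
      as [j [[hj dj]|[hj dj]]]; rewrite <- hidx in dj.
    + exists (a2 + j). left. split; [lia|].
      apply (FT (b2 - a2)); auto. intros; apply in2; lia.
    + exists (a3 + j). right. split; [lia|].
      apply (FT (b3 - a3)); auto. intros; apply in3; lia.
Qed.
End Part2Geo.

Lemma pcat_cases {G : group} m n (p q : nat -> G) k : k <= m + n ->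
  (k <= m /\ pcat m p q k = p k) \/ (k - m <= n /\ pcat m p q k = q (k - m)).
Proof.
  intro hk. unfold pcat. destruct (Nat.leb_spec k m); [left|right]; split; auto; lia.
Qed.

Lemma sq_le_pow m : 4 <= m -> m * m <= 2 ^ m.
Proof.
  intro hm. induction hm as [|m hm IH].
  - simpl. lia.
  - rewrite Nat.pow_succ_r'. nia.
Qed.

Lemma pow_bound m a : 2 ^ m <= a * m + a -> m <= 2 * a + 4.
Proof.
  intro h. destruct (Nat.lt_ge_cases m 4) as [hm|hm]; [lia|].
  pose proof (sq_le_pow m hm). nia.
Qed.

Section Morse.
Context {K : group} (S2 : K -> Prop) (d : nat) (hyp : thin S2 d)
  (conn : forall u w, exists n, walk S2 n u w).

Lemma halving m : forall n c u w L gam, is_path S2 n c u w -> n <= 2 ^ m ->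
  is_geodesic S2 L gam u w -> forall j, j <= L ->
  exists s, s <= n /\ dist_le S2 (d * m + 1) (gam j) (c s).
Proof.
  induction m as [|m IH]; intros n c u w L gam hc hn hg j hj.
  - simpl in hn. assert (hL : L <= n) by (destruct hg as [_ hmin]; apply hmin; exists c; auto).
    destruct hc as [c0 [c1 _]]. destruct hg as [[g0 [g1 _]] _].
    destruct (Nat.eq_dec j 0) as [->|nj].
    + exists 0. split; [lia|]. rewrite g0, c0. apply dist_le_eq; auto.
    + assert (j = L) by lia. subst j. exists n. split; auto. rewrite g1, c1. apply dist_le_eq; auto.
  - destruct (Nat.le_gt_cases n 1) as [hn1|hn1].
    + assert (hL : L <= n) by (destruct hg as [_ hmin]; apply hmin; exists c; auto).
      destruct hc as [c0 [c1 _]]. destruct hg as [[g0 [g1 _]] _].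
      destruct (Nat.eq_dec j 0) as [->|nj].
      * exists 0. split; [lia|]. rewrite g0, c0. apply dist_le_eq; auto.
      * assert (j = L) by lia. subst j. exists n. split; auto. rewrite g1, c1. apply dist_le_eq; auto.
    + set (h := n / 2).
      assert (hh1 : h <= 2 ^ m) by (unfold h; rewrite Nat.pow_succ_r' in hn; apply Nat.Div0.div_le_upper_bound; lia).
      assert (hh2 : n - h <= 2 ^ m).
      { unfold h. rewrite Nat.pow_succ_r' in hn. pose proof (Nat.div_mod n 2 ltac:(lia)).
        pose proof (Nat.mod_upper_bound n 2 ltac:(lia)). lia. }
      assert (hhn : h <= n) by (unfold h; apply Nat.Div0.div_le_upper_bound; lia).
      pose proof (path_sub S2 _ _ _ _ 0 h hc ltac:(lia)) as c1. rewrite Nat.sub_0_r in c1. simpl in c1.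
      pose proof (path_sub S2 _ _ _ _ h n hc ltac:(lia)) as c2.
      destruct hc as [hc0 [hcn _]].
      destruct (geodesic_exists S2 (c 0) (c h) (conn _ _)) as [L1 [b1 gb1]].
      destruct (geodesic_exists S2 (c h) (c n) (conn _ _)) as [L2 [b2 gb2]].
      rewrite <- hc0, <- hcn in hg.
      destruct (hyp _ _ _ _ _ _ _ _ _ hg (geo_rev _ _ _ _ _ gb2) (geo_rev _ _ _ _ _ gb1) j hj)
        as [j' [[hj' dj']|[hj' dj']]].
      * destruct (IH _ _ _ _ _ _ c2 hh2 gb2 (L2 - j') ltac:(lia)) as [s [hs ds]].
        exists (h + s). split; [lia|].
        eapply dist_le_mono; [|eapply dist_le_trans; eauto]. lia.
      * destruct (IH _ _ _ _ _ _ c1 hh1 gb1 (L1 - j') ltac:(lia)) as [s [hs ds]].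
        exists s. split; [lia|].
        eapply dist_le_mono; [|eapply dist_le_trans; eauto]. lia.
Qed.

Context (lam : nat) (n : nat) (c : nat -> K) (u w : K) (hc : is_path S2 n c u w)
  (QG : forall s1 s2 m, s1 <= s2 <= n -> walk S2 m (c s1) (c s2) -> s2 - s1 <= lam * m).

Lemma QG' s1 s2 m : s1 <= n -> s2 <= n -> dist_le S2 m (c s1) (c s2) ->
  s2 - s1 <= lam * m /\ s1 - s2 <= lam * m.
Proof.
  intros h1 h2 [m' [hm wm]]. destruct (Nat.le_ge_cases s1 s2).
  - pose proof (QG s1 s2 m' ltac:(lia) wm). pose proof (Nat.mul_le_mono_l m' m lam hm). split; lia.
  - pose proof (QG s2 s1 m' ltac:(lia) (walk_rev _ _ _ _ wm)). pose proof (Nat.mul_le_mono_l m' m lam hm). split; lia.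
Qed.

Lemma midpath s1 s2 : s1 <= n -> s2 <= n -> exists lc cm,
  is_path S2 lc cm (c s1) (c s2) /\ lc <= s2 - s1 + (s1 - s2) /\ forall k, k <= lc -> exists s, s <= n /\ cm k = c s.
Proof.
  intros h1 h2. destruct (Nat.le_ge_cases s1 s2).
  - exists (s2 - s1), (fun k => c (s1 + k)). split; [apply (path_sub S2 n c u w); auto; lia|].
    split; [lia|]. intros k hk. exists (s1 + k). split; auto; lia.
  - exists (s1 - s2), (fun k => c (s1 - k)). split.
    + pose proof (path_rev S2 _ _ _ _ (path_sub S2 _ _ _ _ s2 s1 hc ltac:(lia))) as pr. simpl in pr.
      destruct pr as [a [b e]]. repeat split.
      * rewrite <- a. f_equal. lia.
      * rewrite <- b. f_equal. lia.
      * intros k hk. pose proof (e k hk) as e'. replace (s2 + (s1 - s2 - k)) with (s1 - k) in e' by lia.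
        replace (s2 + (s1 - s2 - Datatypes.S k)) with (s1 - Datatypes.S k) in e' by lia. auto.
    + split; [lia|]. intros k hk. exists (s1 - k). split; auto; lia.
Qed.

Definition Bm := d * (2 * (2 * (6 * lam + 2) * (d + 1)) + 4) + 1.

Lemma morse_near L gam : is_geodesic S2 L gam u w ->
  forall j, j <= L -> exists s, s <= n /\ dist_le S2 Bm (gam j) (c s).
Proof.
  intros hg.
  pose proof hc as [hc0 [hcn hcs]]. pose proof (geo_path _ _ _ _ _ hg) as [hg0 [hgL hgs]].
  destruct (ex_min (fun D => forall j, j <= L -> exists s, s <= n /\ dist_le S2 D (gam j) (c s)))
    as [D [HD Dmin]].
  { exists L. intros j hj. exists 0. split; [lia|]. rewrite hc0.
    apply dist_le_sym. apply (dist_le_mono _ j); auto. eapply path_point_dist; eauto. apply geo_path in hg; exact hg. }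
  cut (D <= Bm).
  { intros DB j hj. destruct (HD j hj) as [s [hs ds]]. exists s. split; auto.
    eapply dist_le_mono; eauto. }
  destruct (Nat.eq_dec D 0) as [->|D0]; [unfold Bm; lia|].
  assert (exists j0, j0 <= L /\ forall s, s <= n -> ~ dist_le S2 (D - 1) (gam j0) (c s)) as [j0 [hj0 far]].
  { apply NNPP. intro hno. assert (D <= D - 1); [|lia]. apply Dmin. intros j hj.
    apply NNPP. intro hn'. apply hno. exists j. split; auto. intros s hs ds. apply hn'. eauto. }
  set (Far := fun g => ~ dist_le S2 (D - 1) (gam j0) g).
  assert (exact_g : forall a b e, a <= b <= L -> dist_le S2 e (gam a) (gam b) -> b - a <= e).
  { intros a b e hab de. eapply geo_dist_exact; eauto. }
  assert (LEFT : exists jy sy ly rho, jy <= j0 /\ j0 - jy <= 2 * D /\ sy <= n /\ ly <= D /\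
     is_path S2 ly rho (gam jy) (c sy) /\ forall k, k <= ly -> Far (rho k)).
  { destruct (Nat.le_gt_cases (2 * D) j0) as [hle|hgt].
    - destruct (HD (j0 - 2 * D) ltac:(lia)) as [sy [hsy [ly [hly [rho hr]]]]].
      exists (j0 - 2 * D), sy, ly, rho. refine (conj _ (conj _ (conj _ (conj _ (conj hr _))))); try lia.
      intros k hk hd. pose proof (path_point_dist _ _ _ _ _ _ hr hk) as dk.
      assert (dd : dist_le S2 (D - 1 + k) (gam j0) (gam (j0 - 2 * D))).
      { eapply dist_le_trans; [exact hd|apply dist_le_sym; exact dk]. }
      apply dist_le_sym in dd. apply exact_g in dd; lia.
    - exists 0, 0, 0, (fun _ => c 0). refine (conj _ (conj _ (conj _ (conj _ (conj _ _))))); try lia.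
      + repeat split; [rewrite hg0, hc0; auto|intros k hk; lia].
      + intros k hk. apply far. lia. }
  assert (RIGHT : exists jz sz lz rho, j0 <= jz /\ jz <= L /\ jz - j0 <= 2 * D /\ sz <= n /\ lz <= D /\
     is_path S2 lz rho (c sz) (gam jz) /\ forall k, k <= lz -> Far (rho k)).
  { destruct (Nat.le_gt_cases (j0 + 2 * D) L) as [hle|hgt].
    - destruct (HD (j0 + 2 * D) ltac:(lia)) as [sz [hsz [lz [hlz [rho hr]]]]].
      pose proof (path_rev _ _ _ _ _ hr) as hr'.
      exists (j0 + 2 * D), sz, lz, (fun k => rho (lz - k)).
      refine (conj _ (conj _ (conj _ (conj _ (conj _ (conj hr' _)))))); try lia.
      intros k hk hd. assert (hk' : lz - k <= lz) by lia.
      pose proof (path_point_dist _ _ _ _ _ _ hr hk') as dk.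
      assert (dd : dist_le S2 (D - 1 + (lz - k)) (gam j0) (gam (j0 + 2 * D))).
      { eapply dist_le_trans; [exact hd|apply dist_le_sym; exact dk]. }
      apply exact_g in dd; lia.
    - exists L, n, 0, (fun _ => c n). refine (conj _ (conj _ (conj _ (conj _ (conj _ (conj _ _)))))); try lia.
      + repeat split; [rewrite hgL, hcn; auto|intros k hk; lia].
      + intros k hk. apply far. lia. }
  destruct LEFT as [jy [sy [ly [rho1 [hjy1 [hjy2 [hsy [hly [hr1 fr1]]]]]]]]].
  destruct RIGHT as [jz [sz [lz [rho2 [hjz1 [hjz0 [hjz2 [hsz [hlz [hr2 fr2]]]]]]]]]].
  destruct (midpath sy sz hsy hsz) as [lc [cm [hcm [hlc fcm]]]].
  assert (dyz : dist_le S2 (ly + (jz - jy) + lz) (c sy) (c sz)).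
  { eapply dist_le_trans; [eapply dist_le_trans|].
    - apply dist_le_sym, dist_le_walk. exists rho1. exact hr1.
    - apply dist_le_walk. pose proof (path_sub S2 _ _ _ _ jy jz (geo_path _ _ _ _ _ hg) ltac:(lia)) as ps.
      eexists; eauto.
    - apply dist_le_sym, dist_le_walk. exists rho2. exact hr2. }
  destruct (QG' sy sz _ hsy hsz dyz) as [q1 q2].
  assert (X6 : ly + (jz - jy) + lz <= 6 * D) by lia.
  pose proof (Nat.mul_le_mono_l _ _ lam X6).
  assert (hlc' : lc <= lam * (6 * D)) by lia.
  pose proof (path_cat S2 _ _ _ _ _ _ _ hr1 (path_cat S2 _ _ _ _ _ _ _ hcm hr2)) as hcp.
  set (ell := ly + (lc + lz)) in hcp.
  set (cp := pcat ly rho1 (pcat lc cm rho2)) in hcp.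
  assert (farcp : forall k, k <= ell -> Far (cp k)).
  { intros k hk. unfold cp. destruct (pcat_cases ly (lc + lz) rho1 (pcat lc cm rho2) k hk) as [[h1 e]|[h1 e]];
      rewrite e; [apply fr1; auto|].
    destruct (pcat_cases lc lz cm rho2 (k - ly) h1) as [[h2 e2]|[h2 e2]]; rewrite e2; [|apply fr2; auto].
    destruct (fcm _ h2) as [s [hs es]]. rewrite es. apply far; auto. }
  pose proof (geo_sub _ _ _ _ _ jy jz hg ltac:(lia)) as gseg.
  set (Q := 6 * lam + 2).
  destruct (ex_min (fun m => Q * D <= 2 ^ m)) as [m [hm mmin]].
  { exists (Q * D). apply Nat.lt_le_incl, Nat.pow_gt_lin_r. lia. }
  assert (hell : ell <= 2 ^ m) by (unfold ell, Q in *; lia).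
  destruct (halving m _ _ _ _ _ _ hcp hell gseg (j0 - jy) ltac:(lia)) as [s [hs ds]].
  replace (jy + (j0 - jy)) with j0 in ds by lia.
  assert (HD1 : D <= d * m + 1).
  { apply NNPP. intro hlt. apply (farcp s hs). eapply dist_le_mono; [|exact ds]. lia. }
  assert (m0 : m <> 0). { intros ->. simpl in hm. unfold Q in hm. lia. }
  assert (hm1 : 2 ^ (m - 1) < Q * D).
  { apply NNPP. intro hh. assert (m <= m - 1) by (apply mmin; lia). lia. }
  assert (h2m : 2 ^ m <= 2 * Q * (d + 1) * m + 2 * Q * (d + 1)).
  { replace m with (Datatypes.S (m - 1)) at 1 by lia. rewrite Nat.pow_succ_r'.
    pose proof (Nat.mul_le_mono_l D (d * m + 1) Q HD1). lia. }
  apply pow_bound in h2m. unfold Bm. fold Q. pose proof (Nat.mul_le_mono_l _ _ d h2m). lia.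
Qed.

Lemma morse_far L gam : is_geodesic S2 L gam u w ->
  forall s, s <= n -> exists j, j <= L /\ dist_le S2 (7 * Bm + 3 * lam + lam * Bm * 6) (c s) (gam j).
Proof.
  intros hg s hs.
  pose proof hc as [hc0 [hcn hcs]]. pose proof (geo_path _ _ _ _ _ hg) as [hg0 [hgL hgs]].
  pose proof (morse_near L gam hg) as NEAR.
  destruct (ex_min (fun j => j <= L /\ exists s', s <= s' /\ s' <= n /\ dist_le S2 Bm (gam j) (c s'))) as [js [[hjs [s' [h1 [h2 ds']]]] jmin]].
  { exists L. split; auto. exists n. repeat split; auto. rewrite hgL, hcn. apply dist_le_eq; auto. }
  destruct (Nat.eq_dec js 0) as [->|nz].
  - rewrite hg0, <- hc0 in ds'.
    destruct (QG' 0 s' Bm ltac:(lia) h2 ds') as [q1 _].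
    exists 0. split; [lia|]. rewrite hg0, <- hc0.
    pose proof (path_point_dist _ _ _ _ _ _ hc hs) as dd. rewrite <- hc0 in dd.
    apply dist_le_sym. eapply dist_le_mono; [|exact dd]. lia.
  - destruct (NEAR (js - 1) ltac:(lia)) as [s'' [hs'' ds'']].
    assert (hlt : s'' < s).
    { apply NNPP. intro hge. assert (js <= js - 1); [|lia]. apply jmin. split; [lia|].
      exists s''. repeat split; auto; lia. }
    assert (adj : dist_le S2 1 (gam (js - 1)) (gam js)).
    { apply dist_le_adj. replace js with (Datatypes.S (js - 1)) at 2 by lia. apply hgs. lia. }
    assert (dss : dist_le S2 (Bm + 1 + Bm) (c s'') (c s')).
    { eapply dist_le_trans; [eapply dist_le_trans|]; [apply dist_le_sym; exact ds''|exact adj|exact ds']. }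
    destruct (QG' s'' s' _ ltac:(lia) h2 dss) as [q1 _].
    exists (js - 1). split; [lia|].
    pose proof (path_sub S2 _ _ _ _ s'' s hc ltac:(lia)) as ps.
    assert (dws : dist_le S2 (s - s'') (c s'') (c s)) by (apply dist_le_walk; eexists; eauto).
    eapply dist_le_mono; [|eapply dist_le_trans; [apply dist_le_sym; exact dws|apply dist_le_sym; exact ds'']].
    lia.
Qed.
End Morse.

Lemma transfer {K : group} (S S2 : K -> Prop) (hSS : forall s, S s -> S2 s)
  (c3 : forall x y m, walk S2 m x y -> dist_le S (3 * m) x y) (d2 : nat) (hyp2 : thin S2 d2)
  (conn2 : forall u w, exists n, walk S2 n u w) : cayley_hyperbolic S.
Proof.
  set (B := Bm d2 3).
  set (R := 7 * B + 3 * 3 + 3 * B * 6).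
  exists (3 * (R + d2 + B)).
  assert (D2 : forall M x y, dist_le S2 M x y -> dist_le S (3 * M) x y).
  { intros M x y [m [hm wm]]. apply c3 in wm. eapply dist_le_mono; [|exact wm]. lia. }
  assert (QGp : forall n p x y, is_geodesic S n p x y ->
     forall s1 s2 m, s1 <= s2 <= n -> walk S2 m (p s1) (p s2) -> s2 - s1 <= 3 * m).
  { intros n p x y hg s1 s2 m hs wm. apply c3 in wm. eapply geo_dist_exact; eauto. }
  assert (P2 : forall n p x y, is_geodesic S n p x y -> is_path S2 n p x y).
  { intros n p x y hg. apply geo_path in hg. destruct hg as [a [b h]]. repeat split; auto.
    intros k hk. destruct (h k hk) as [e|e]; [left|right]; auto. }
  intros x y z n1 n2 n3 p1 p2 p3 g1 g2 g3 k hk.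
  destruct (geodesic_exists S2 x y (conn2 _ _)) as [L1 [q1 gq1]].
  destruct (geodesic_exists S2 y z (conn2 _ _)) as [L2 [q2 gq2]].
  destruct (geodesic_exists S2 z x (conn2 _ _)) as [L3 [q3 gq3]].
  destruct (morse_far S2 d2 hyp2 conn2 3 n1 p1 x y (P2 _ _ _ _ g1) (QGp _ _ _ _ g1) L1 q1 gq1 k hk)
    as [j [hj dj]].
  destruct (hyp2 _ _ _ _ _ _ _ _ _ gq1 gq2 gq3 j hj) as [j' [[hj' dj']|[hj' dj']]].
  - destruct (morse_near S2 d2 hyp2 conn2 3 n2 p2 y z (P2 _ _ _ _ g2) (QGp _ _ _ _ g2) L2 q2 gq2 j' hj')
      as [s [hs ds]].
    exists s. left. split; auto. apply D2. unfold R, B.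
    eapply dist_le_trans; [eapply dist_le_trans|]; eauto.
  - destruct (morse_near S2 d2 hyp2 conn2 3 n3 p3 z x (P2 _ _ _ _ g3) (QGp _ _ _ _ g3) L3 q3 gq3 j' hj')
      as [s [hs ds]].
    exists s. right. split; auto. apply D2. unfold R, B.
    eapply dist_le_trans; [eapply dist_le_trans|]; eauto.
Qed.

Ltac gnorm := repeat progress rewrite ?invM, ?invK, ?inv1, ?mulA, ?mulKr, ?mulKr', ?mulVl, ?mulVr, ?mul1l, ?mul1r.
Ltac gnormH h := repeat progress rewrite ?invM, ?invK, ?inv1, ?mulA, ?mulKr, ?mulKr', ?mulVl, ?mulVr, ?mul1l, ?mul1r in h.

Section Rep.
Context {H : group} (C : H -> Prop) (hC : is_subgroup C).

Definition rep (x : H) : H :=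
  epsilon (inhabits gone) (fun r => C (ginv x ** r) /\ (C x -> r = gone)).

Lemma rep_spec x : C (ginv x ** rep x) /\ (C x -> rep x = gone).
Proof.
  unfold rep. apply epsilon_spec.
  destruct (classic (C x)) as [h|h].
  - exists gone. rewrite mul1r. split; auto. apply subgroupV; auto.
  - exists x. rewrite mulVl. split; [apply subgroup1; auto| tauto].
Qed.

Lemma rep_coset x y : C (ginv x ** y) -> rep x = rep y.
Proof.
  intro hxy. unfold rep. f_equal. apply functional_extensionality; intro r.
  apply propositional_extensionality.
  assert (hyx : C (ginv y ** x)).
  { replace (ginv y ** x) with (ginv (ginv x ** y)) by (gnorm; auto). apply subgroupV; auto. }
  split; intros [h1 h2]; split.
  - replace (ginv y ** r) with ((ginv y ** x) ** (ginv x ** r)) by (gnorm; auto).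
    apply subgroupM; auto.
  - intro hy. apply h2. replace x with (y ** (ginv y ** x)) by (gnorm; auto). apply subgroupM; auto.
  - replace (ginv x ** r) with ((ginv x ** y) ** (ginv y ** r)) by (gnorm; auto).
    apply subgroupM; auto.
  - intro hx. apply h2. replace y with (x ** (ginv x ** y)) by (gnorm; auto). apply subgroupM; auto.
Qed.

Lemma rep_resid x : C (ginv (rep x) ** x).
Proof.
  destruct (rep_spec x) as [h _]. replace (ginv (rep x) ** x) with (ginv (ginv x ** rep x)) by (gnorm; auto).
  apply subgroupV; auto.
Qed.

Lemma rep_idem x : rep (rep x) = rep x.
Proof. symmetry. apply rep_coset. apply rep_spec. Qed.

Lemma rep_one_iff x : rep x = gone <-> C x.
Proof.
  split.
  - intro h. pose proof (rep_resid x) as r. rewrite h, inv1, mul1l in r. auto.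
  - apply rep_spec.
Qed.

Lemma rep_eq_coset x y : rep x = rep y -> C (ginv x ** y).
Proof.
  intro e. pose proof (proj1 (rep_spec x)) as h1. pose proof (rep_resid y) as h2.
  rewrite <- e in h2.
  replace (ginv x ** y) with ((ginv x ** rep x) ** (ginv (rep x) ** y)) by (gnorm; auto).
  apply subgroupM; auto.
Qed.

Lemma rep_mul_in x y : C x -> (rep (x ** y) = gone <-> rep y = gone).
Proof.
  intro hx. rewrite !rep_one_iff. split; intro h.
  - replace y with (ginv x ** (x ** y)) by (gnorm; auto). apply subgroupM; auto. apply subgroupV; auto.
  - apply subgroupM; auto.
Qed.
End Rep.

Section Perm.
Context (X : Type).
Record perm := Perm { pf : X -> X; pg : X -> X; pfg : forall x, pf (pg x) = x; pgf : forall x, pg (pf x) = x }.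

Lemma perm_ext (p q : perm) : (forall x, pf p x = pf q x) -> p = q.
Proof.
  intro h.
  assert (hg : forall x, pg p x = pg q x).
  { intro x. rewrite <- (pgf q (pg p x)). rewrite <- h, pfg. auto. }
  destruct p as [f1 g1 a1 b1], q as [f2 g2 a2 b2]. simpl in *.
  assert (f1 = f2) by (apply functional_extensionality; auto).
  assert (g1 = g2) by (apply functional_extensionality; auto).
  subst. f_equal; apply proof_irrelevance.
Qed.

Definition pmul (p q : perm) : perm.
Proof.
  refine (Perm (fun x => pf p (pf q x)) (fun x => pg q (pg p x)) _ _).
  - intro x. rewrite pfg, pfg. auto.
  - intro x. rewrite pgf, pgf. auto.
Defined.
Definition pone : perm := Perm (fun x => x) (fun x => x) (fun x => eq_refl) (fun x => eq_refl).
Definition pinv (p : perm) : perm := Perm (pg p) (pf p) (pgf p) (pfg p).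

Definition permG : group.
Proof.
  refine (@Group perm pmul pone pinv _ _ _).
  - intros. apply perm_ext. intro; reflexivity.
  - intros. apply perm_ext. intro; reflexivity.
  - intros. apply perm_ext. intro. simpl. apply pgf.
Defined.
End Perm.
Arguments Perm {X}. Arguments pf {X}. Arguments pg {X}. Arguments pfg {X}. Arguments pgf {X}. Arguments perm_ext {X}.


Section NF.
Context {H : group} (A B : H -> Prop) (mu : H -> H)
  (hA : is_subgroup A) (hB : is_subgroup B) (hmu : is_iso_between A B mu).

Definition Ce (e : bool) : H -> Prop := if e then A else B.
Lemma Ce_sub e : is_subgroup (Ce e). Proof. destruct e; simpl; auto. Qed.

Definition muinv (b : H) : H := epsilon (inhabits gone) (fun a => A a /\ mu a = b).
Lemma muinv_spec b : B b -> A (muinv b) /\ mu (muinv b) = b.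
Proof.
  intro hb. unfold muinv. apply epsilon_spec. destruct hmu as [_ [_ [_ h]]]. apply h; auto.
Qed.
Lemma mu_in a : A a -> B (mu a). Proof. destruct hmu as [h _]; auto. Qed.
Lemma mu_hom a1 a2 : A a1 -> A a2 -> mu (a1 ** a2) = mu a1 ** mu a2.
Proof. destruct hmu as [_ [h _]]; auto. Qed.
Lemma mu_inj a1 a2 : A a1 -> A a2 -> mu a1 = mu a2 -> a1 = a2.
Proof. destruct hmu as [_ [_ [h _]]]; auto. Qed.
Lemma mu_one : mu gone = gone.
Proof.
  pose proof (mu_hom gone gone (subgroup1 _ hA) (subgroup1 _ hA)) as h. rewrite mul1l in h.
  apply (mul_cancel_l (mu gone)). rewrite <- h, mul1r. auto.
Qed.
Lemma mu_inv a : A a -> mu (ginv a) = ginv (mu a).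
Proof.
  intro ha. apply inv_uniq. rewrite <- mu_hom; auto. rewrite mulVr. apply mu_one.
  apply subgroupV; auto.
Qed.
Lemma muinv_mu a : A a -> muinv (mu a) = a.
Proof.
  intro ha. destruct (muinv_spec (mu a) (mu_in a ha)) as [h1 h2]. apply mu_inj; auto.
Qed.
Lemma muinv_hom b1 b2 : B b1 -> B b2 -> muinv (b1 ** b2) = muinv b1 ** muinv b2.
Proof.
  intros h1 h2. destruct (muinv_spec b1 h1) as [a1 e1]. destruct (muinv_spec b2 h2) as [a2 e2].
  rewrite <- e1 at 1. rewrite <- e2 at 1. rewrite <- mu_hom; auto. apply muinv_mu. apply subgroupM; auto.
Qed.

Definition mue (e : bool) : H -> H := if e then mu else muinv.
Lemma mue_in e r : Ce e r -> Ce (negb e) (mue e r).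
Proof. destruct e; simpl; intro h; [apply mu_in; auto| apply muinv_spec; auto]. Qed.
Lemma mue_hom e r1 r2 : Ce e r1 -> Ce e r2 -> mue e (r1 ** r2) = mue e r1 ** mue e r2.
Proof. destruct e; simpl; intros; [apply mu_hom|apply muinv_hom]; auto. Qed.
Lemma mue_one e : mue e gone = gone.
Proof.
  destruct e; simpl; [apply mu_one|]. rewrite <- mu_one at 1. apply muinv_mu. apply subgroup1; auto.
Qed.

Definition repe (e : bool) := rep (Ce e).

Fixpoint nf (w : list (H * bool)) : Prop :=
  match w with
  | [] => True
  | (c, e) :: w' => repe e c = c /\ nf w' /\
      match w' with [] => True | (c', e') :: _ => e <> e' -> c' <> gone end
  end.

Fixpoint act (h : H) (w : list (H * bool)) (h0 : H) : list (H * bool) * H :=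
  match w with
  | [] => ([], h ** h0)
  | (c, e) :: w' =>
      let c' := repe e (h ** c) in
      let p := act (mue e (ginv c' ** (h ** c))) w' h0 in
      ((c', e) :: fst p, snd p)
  end.

Lemma resid_in e x : Ce e (ginv (repe e x) ** x).
Proof. unfold repe. apply (rep_resid (Ce e) (Ce_sub e)). Qed.

Lemma act_hom w : forall h1 h2 h0,
  act h1 (fst (act h2 w h0)) (snd (act h2 w h0)) = act (h1 ** h2) w h0.
Proof.
  induction w as [|[c e] w IH]; intros h1 h2 h0; simpl.
  - rewrite mulA; auto.
  - rewrite IH.
    assert (ec : repe e (h1 ** repe e (h2 ** c)) = repe e (h1 ** h2 ** c)).
    { apply rep_coset; [apply Ce_sub|].
      replace (ginv (h1 ** repe e (h2 ** c)) ** (h1 ** h2 ** c)) with (ginv (repe e (h2 ** c)) ** (h2 ** c))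
        by (gnorm; auto).
      apply resid_in. }
    rewrite ec. rewrite <- mue_hom.
    + assert (E: ginv (repe e (h1 ** h2 ** c)) ** (h1 ** repe e (h2 ** c)) ** (ginv (repe e (h2 ** c)) ** (h2 ** c)) = ginv (repe e (h1 ** h2 ** c)) ** (h1 ** h2 ** c)) by (gnorm; reflexivity). rewrite E. reflexivity.
    + rewrite <- ec. apply resid_in.
    + apply resid_in.
Qed.

Lemma act_one w h0 : nf w -> act gone w h0 = (w, h0).
Proof.
  induction w as [|[c e] w IH]; intros hw; simpl.
  - rewrite mul1l; auto.
  - destruct hw as [hc [hw _]]. rewrite mul1l, hc, mulVl, mue_one, IH; auto.
Qed.

Lemma act_snd_indep w : forall h h0 h0', fst (act h w h0) = fst (act h w h0').
Proof. induction w as [|[c e] w IH]; intros; simpl; auto. rewrite (IH _ h0 h0'). auto. Qed.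

Lemma act_nf w : forall h h0, nf w -> nf (fst (act h w h0)).
Proof.
  induction w as [|[c e] w IH]; intros h h0 hw; simpl; auto.
  destruct hw as [hc [hw hh]]. split; [apply rep_idem, Ce_sub|]. split; [apply IH; auto|].
  destruct w as [|[c2 e2] w2]; simpl; auto.
  intros hne hone. apply (hh hne).
  assert (e2 = negb e) by (destruct e, e2; simpl; congruence). subst e2.
  destruct hw as [hc2 _].
  pose proof (mue_in e (ginv (repe e (h ** c)) ** (h ** c)) (resid_in e _)) as hy.
  unfold repe in hone. apply (proj1 (rep_mul_in _ (Ce_sub _) _ c2 hy)) in hone.
  rewrite <- hc2. exact hone.
Qed.

Lemma nf_app_inv w w2 : nf (w ++ w2) -> nf w.
Proof.
  induction w as [|[c e] w IH]; simpl; auto. intros [h1 [h2 h3]]. split; auto. split; auto.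
  destruct w as [|[c' e'] w']; simpl in *; auto.
Qed.

Lemma nf_snoc w c e : nf w -> repe e c = c ->
  (forall w' c' e', w = w' ++ [(c', e')] -> e' <> e -> c <> gone) -> nf (w ++ [(c, e)]).
Proof.
  induction w as [|[c1 e1] w IH]; intros hw hc hl; simpl.
  - auto.
  - destruct hw as [h1 [h2 h3]]. split; auto. split.
    + apply IH; auto. intros w' c' e' ew. apply (hl ((c1, e1) :: w') c' e'). rewrite ew; auto.
    + destruct w as [|[c2 e2] w2]; simpl; auto.
      intro hne. apply (hl [] c1 e1); auto.
Qed.

Definition isone (c : H) : bool := if excluded_middle_informative (c = gone) then true else false.
Lemma isone_true c : isone c = true <-> c = gone.
Proof. unfold isone. destruct (excluded_middle_informative (c = gone)); split; intro; congruence. Qed.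

Definition tpush (e : bool) (x : list (H * bool) * H) : list (H * bool) * H :=
  match fst x with
  | (c, e') :: w' => if Bool.eqb e' (negb e) && isone c then (w', snd x) else ((gone, e) :: fst x, snd x)
  | [] => ([(gone, e)], snd x)
  end.

Lemma repe_one e : repe e gone = gone.
Proof. apply rep_one_iff; [apply Ce_sub|]. apply subgroup1, Ce_sub. Qed.

Lemma tpush_nf e x : nf (fst x) -> nf (fst (tpush e x)).
Proof.
  destruct x as [w h0]. unfold tpush; simpl. destruct w as [|[c e'] w']; simpl.
  - intros _. split; [apply repe_one|split; auto].
  - intros hw. destruct (Bool.eqb e' (negb e) && isone c) eqn:E; simpl.
    + destruct hw as [_ [hw _]]; auto.
    + split; [apply repe_one|]. split; [exact hw|].
      intros hne hc. apply Bool.andb_false_iff in E. destruct E as [E|E].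
      * destruct e, e'; simpl in *; congruence.
      * apply isone_true in hc. congruence.
Qed.

Lemma tpush_inv e x : nf (fst x) -> tpush (negb e) (tpush e x) = x.
Proof.
  destruct x as [w h0]. unfold tpush; simpl. destruct w as [|[c e'] w']; simpl.
  - rewrite Bool.negb_involutive, Bool.eqb_reflx.
    assert (isone gone = true) by (apply isone_true; auto). rewrite H0. auto.
  - intro hw. destruct (Bool.eqb e' (negb e) && isone c) eqn:E; simpl.
    + apply Bool.andb_true_iff in E. destruct E as [E1 E2]. apply Bool.eqb_prop in E1. subst e'.
      apply isone_true in E2. subst c.
      destruct w' as [|[c2 e2] w2]; simpl.
      * auto.
      * destruct hw as [_ [_ hh]]. destruct (Bool.eqb e2 (negb (negb e)) && isone c2) eqn:E'.
        -- apply Bool.andb_true_iff in E'. destruct E' as [E1 E2]. apply Bool.eqb_prop in E1.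
           rewrite Bool.negb_involutive in E1. subst e2. apply isone_true in E2.
           exfalso. apply hh; auto. destruct e; simpl; congruence.
        -- auto.
    + rewrite Bool.negb_involutive, Bool.eqb_reflx.
      assert (isone gone = true) by (apply isone_true; auto). rewrite H0. auto.
Qed.

Let CeS := Ce_sub.

Lemma isone1 : isone (@gone H) = true.
Proof. apply isone_true; auto. Qed.

Lemma tpush_rel a x : A a -> nf (fst x) ->
  tpush false (act a (fst (tpush true x)) (snd (tpush true x))) = act (mu a) (fst x) (snd x).
Proof.
  intros ha hx. destruct x as [w h0].
  assert (hra : repe true a = gone) by (apply rep_one_iff; [apply CeS|auto]).
  assert (hrb : repe false (mu a) = gone) by (apply rep_one_iff; [apply CeS|apply mu_in; auto]).
  destruct w as [|[c e] w']; simpl.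
  - rewrite mul1r, hra, inv1, mul1l. unfold tpush; simpl. rewrite isone1. simpl.
    reflexivity.
  - unfold tpush at 2. simpl.
    destruct (Bool.eqb e false && isone c) eqn:E; simpl.
    + apply Bool.andb_true_iff in E. destruct E as [E1 E2]. apply Bool.eqb_prop in E1. subst e.
      apply isone_true in E2. subst c.
      rewrite mul1r, hrb, inv1, mul1l, muinv_mu; auto.
      destruct hx as [_ [hw hh]].
      destruct w' as [|[c2 e2] w2]; simpl.
      * unfold tpush; simpl. rewrite ?isone1. simpl. auto.
      * unfold tpush; simpl.
        destruct (Bool.eqb e2 true && isone (repe e2 (a ** c2))) eqn:E'.
        -- exfalso. apply Bool.andb_true_iff in E'. destruct E' as [E1 E2]. apply Bool.eqb_prop in E1.
           subst e2. apply isone_true in E2. apply hh; [congruence|].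
           destruct hw as [hc2 _]. rewrite <- hc2.
           apply (proj1 (rep_mul_in _ (CeS true) a c2 ha)); auto.
        -- rewrite ?isone1. simpl. auto.
    + rewrite mul1r, hra, inv1, mul1l. simpl.
      unfold tpush; simpl. rewrite isone1. simpl. rewrite ?E. auto.
Qed.

Definition Xt := {x : list (H * bool) * H | nf (fst x)}.
Lemma Xt_eq (x y : Xt) : proj1_sig x = proj1_sig y -> x = y.
Proof. destruct x as [x hx], y as [y hy]; simpl. intros ->. f_equal. apply proof_irrelevance. Qed.

Definition actX (h : H) (x : Xt) : Xt :=
  exist _ (act h (fst (proj1_sig x)) (snd (proj1_sig x))) (act_nf _ h _ (proj2_sig x)).
Definition tX (e : bool) (x : Xt) : Xt :=
  exist _ (tpush e (proj1_sig x)) (tpush_nf e _ (proj2_sig x)).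

Lemma actX_comp h1 h2 x : actX h1 (actX h2 x) = actX (h1 ** h2) x.
Proof. apply Xt_eq. simpl. apply act_hom. Qed.
Lemma actX_one x : actX gone x = x.
Proof. apply Xt_eq. destruct x as [[w h0] hx]. simpl. apply act_one; auto. Qed.

Definition fK (h : H) : perm Xt.
Proof.
  refine (Perm (actX h) (actX (ginv h)) _ _).
  - intro x. rewrite actX_comp, mulVr. apply actX_one.
  - intro x. rewrite actX_comp, mulVl. apply actX_one.
Defined.
Definition sK : perm Xt.
Proof.
  refine (Perm (tX true) (tX false) _ _).
  - intro x. apply Xt_eq. simpl. apply (tpush_inv false). apply (proj2_sig x).
  - intro x. apply Xt_eq. simpl. apply (tpush_inv true). apply (proj2_sig x).
Defined.
Definition KG : group := permG Xt.

Lemma fK_hom : @is_hom H KG fK.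
Proof.
  intros h1 h2. apply perm_ext. intro x. simpl. symmetry. apply actX_comp.
Qed.
Lemma fK_rel : forall a, A a -> @gmul KG (@gmul KG (@ginv KG sK) (fK a)) sK = fK (mu a).
Proof.
  intros a ha. apply perm_ext. intro x. apply Xt_eq. simpl. apply tpush_rel; auto. apply (proj2_sig x).
Qed.

Context {G : group} (i : H -> G) (t : G) (hG : is_HNN_extension A mu i t).

Lemma hi : is_hom i. Proof. destruct hG as [h _]; exact h. Qed.
Lemma hiM x y : i (x ** y) = i x ** i y. Proof. apply hi. Qed.
Lemma hi1 : i gone = gone. Proof. apply hom1, hi. Qed.
Lemma hiV x : i (ginv x) = ginv (i x). Proof. apply homV, hi. Qed.
Lemma hrel a : A a -> ginv t ** i a ** t = i (mu a).
Proof. destruct hG as [_ [h _]]; apply h. Qed.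

Lemma hup_ex : exists phi : G -> KG, is_hom phi /\ (forall h, phi (i h) = fK h) /\ phi t = sK.
Proof.
  destruct hG as [_ [_ h]]. destruct (h KG fK sK fK_hom fK_rel) as [phi [hp _]]. eauto.
Qed.
Definition phi : G -> KG := proj1_sig (constructive_indefinite_description _ hup_ex).
Lemma phi_spec : is_hom phi /\ (forall h, phi (i h) = fK h) /\ phi t = sK.
Proof. unfold phi. destruct (constructive_indefinite_description _ hup_ex) as [p hp]. simpl. auto. Qed.
Lemma phi_hom : is_hom phi. Proof. apply phi_spec. Qed.
Lemma phi_i h : phi (i h) = fK h. Proof. apply phi_spec. Qed.
Lemma phi_t : phi t = sK. Proof. apply phi_spec. Qed.

Definition subG (P : G -> Prop) (hP : is_subgroup P) : group.
Proof.
  refine (@Group {g | P g}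
    (fun x y => exist _ (proj1_sig x ** proj1_sig y) (subgroupM P hP _ _ (proj2_sig x) (proj2_sig y)))
    (exist _ gone (subgroup1 P hP))
    (fun x => exist _ (ginv (proj1_sig x)) (subgroupV P hP _ (proj2_sig x))) _ _ _).
  - intros [x hx] [y hy] [z hz]. simpl. apply eq_sig_hprop; [intros; apply proof_irrelevance|]. simpl. apply mulA.
  - intros [x hx]. apply eq_sig_hprop; [intros; apply proof_irrelevance|]. simpl. apply mul1l.
  - intros [x hx]. apply eq_sig_hprop; [intros; apply proof_irrelevance|]. simpl. apply mulVl.
Defined.

Lemma gen_G (P : G -> Prop) : is_subgroup P -> (forall h, P (i h)) -> P t -> forall g, P g.
Proof.
  intros hP hPi hPt g.
  destruct hG as [hi' [hrel' hup]].
  pose (K := subG P hP).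
  pose (f := fun h => exist P (i h) (hPi h) : K).
  pose (s := exist P t hPt : K).
  assert (hf : is_hom f).
  { intros x y. apply eq_sig_hprop; [intros; apply proof_irrelevance|]. simpl. apply hi'. }
  assert (hs : forall a, A a -> gmul (gmul (ginv s) (f a)) s = f (mu a)).
  { intros a ha. apply eq_sig_hprop; [intros; apply proof_irrelevance|]. simpl. apply hrel'; auto. }
  destruct (hup K f s hf hs) as [psi [[hpsi [hpsi_i hpsi_t]] _]].
  destruct (hup G i t hi' hrel') as [id' [_ huniq]].
  pose (incl := fun g => proj1_sig (psi g)).
  assert (e1 : incl g = id' g).
  { apply huniq.
    - intros x y. unfold incl. rewrite hpsi. reflexivity.
    - intro h. unfold incl. rewrite hpsi_i. reflexivity.
    - unfold incl. rewrite hpsi_t. reflexivity. }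
  assert (e2 : g = id' g).
  { apply (huniq (fun x => x)); auto. intros x y; auto. }
  rewrite e2, <- e1. unfold incl. apply (proj2_sig (psi g)).
Qed.

Definition tp (e : bool) : G := if e then t else ginv t.
Fixpoint sigl (w : list (H * bool)) : G :=
  match w with [] => gone | (c, e) :: w' => i c ** (tp e ** sigl w') end.
Definition sig (x : list (H * bool) * H) : G := sigl (fst x) ** i (snd x).

Lemma sigl_app w c e : sigl (w ++ [(c, e)]) = sigl w ** i c ** tp e.
Proof.
  induction w as [|[c1 e1] w IH]; simpl.
  - rewrite mul1r, mul1l. auto.
  - rewrite IH. gnorm. auto.
Qed.

Lemma tp_swap e r : Ce e r -> i r ** tp e = tp e ** i (mue e r).
Proof.
  destruct e; simpl; intro hr.
  - rewrite <- (hrel r hr). gnorm. auto.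
  - destruct (muinv_spec r hr) as [ha hm]. rewrite <- hm at 1. rewrite <- (hrel _ ha). gnorm. auto.
Qed.

Lemma sig_act h w : forall h0, i h ** sig (w, h0) = sig (act h w h0).
Proof.
  revert h. induction w as [|[c e] w IH]; intros h h0; unfold sig; simpl.
  - rewrite mul1l, mul1l, hiM. auto.
  - set (c' := repe e (h ** c)). set (r := ginv c' ** (h ** c)).
    assert (hr : Ce e r) by apply resid_in.
    assert (ehc : i h ** i c = i c' ** i r) by (unfold r; rewrite <- !hiM; f_equal; gnorm; auto).
    pose proof (IH (mue e r) h0) as IH'. unfold sig in IH'. simpl in IH'.
    replace (i c' ** (tp e ** sigl (fst (act (mue e r) w h0))) ** i (snd (act (mue e r) w h0)))
      with (i c' ** tp e ** (sigl (fst (act (mue e r) w h0)) ** i (snd (act (mue e r) w h0)))) by (gnorm; auto).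
    rewrite <- IH'.
    replace (i h ** (i c ** (tp e ** sigl w) ** i h0)) with ((i h ** i c) ** tp e ** sigl w ** i h0) by (gnorm; auto).
    rewrite ehc. rewrite <- (mulA (i c')), tp_swap; auto. gnorm. auto.
Qed.

Lemma sig_tpush e x : tp e ** sig x = sig (tpush e x).
Proof.
  destruct x as [w h0]. unfold tpush, sig; simpl. destruct w as [|[c e'] w']; simpl.
  - rewrite hi1. gnorm. auto.
  - destruct (Bool.eqb e' (negb e) && isone c) eqn:E; simpl.
    + apply Bool.andb_true_iff in E. destruct E as [E1 E2]. apply Bool.eqb_prop in E1. subst e'.
      apply isone_true in E2. subst c. rewrite hi1, mul1l.
      destruct e; simpl; gnorm; auto.
    + rewrite hi1, mul1l. gnorm. auto.
Qed.

Definition x0 : Xt := exist _ ([], gone) I.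

Lemma phi_sig g : forall x : Xt, g ** sig (proj1_sig x) = sig (proj1_sig (pf (phi g) x)).
Proof.
  revert g. apply (gen_G (fun g => forall x : Xt, g ** sig (proj1_sig x) = sig (proj1_sig (pf (phi g) x)))).
  - split; [|split].
    + intro x. rewrite (hom1 _ phi_hom). simpl. apply mul1l.
    + intros a b ha hb x. rewrite (phi_hom a b). simpl. rewrite <- ha, <- hb, mulA. auto.
    + intros a ha x. rewrite (homV _ phi_hom). simpl.
      pose proof (ha (pg (phi a) x)) as e. rewrite pfg in e. rewrite <- e. gnorm. auto.
  - intros h x. rewrite phi_i. simpl. destruct x as [[w h0] hx]. simpl. apply sig_act.
  - intro x. rewrite phi_t. simpl. apply (sig_tpush true).
Qed.

Definition nfd (g : G) : list (H * bool) * H := proj1_sig (pf (phi g) x0).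
Definition pi (g : G) := fst (nfd g).
Definition coord (g : G) := snd (nfd g).

Lemma nfd_nf g : nf (fst (nfd g)). Proof. unfold nfd. apply (proj2_sig (pf (phi g) x0)). Qed.
Lemma pi_nf g : nf (pi g). Proof. apply nfd_nf. Qed.

Lemma sig_nfd g : sig (nfd g) = g.
Proof.
  unfold nfd. rewrite <- phi_sig. simpl. unfold sig; simpl. rewrite hi1, !mul1r. auto.
Qed.
Lemma g_decomp g : g = sigl (pi g) ** i (coord g).
Proof. rewrite <- (sig_nfd g) at 1. unfold sig, pi, coord. auto. Qed.

Lemma phi_tp e : pf (phi (tp e)) = tX e.
Proof.
  destruct e; simpl; rewrite ?phi_t; auto. rewrite (homV _ phi_hom), phi_t. simpl. auto.
Qed.

Lemma nfd_sig_aux w : forall h0 (hw : nf w),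
  proj1_sig (pf (phi (sigl w)) (exist _ ([], h0) I)) = (w, h0).
Proof.
  induction w as [|[c e] w IH]; intros h0 hw; simpl.
  - rewrite (hom1 _ phi_hom). simpl. auto.
  - rewrite (phi_hom (i c)), (phi_hom (tp e)). simpl. rewrite phi_tp.
    destruct hw as [hc [hw hh]].
    rewrite phi_i. simpl. rewrite IH; auto. simpl.
    assert (et : tpush e (w, h0) = ((gone, e) :: w, h0)).
    { unfold tpush; simpl. destruct w as [|[c2 e2] w2]; simpl; auto.
      destruct (Bool.eqb e2 (negb e) && isone c2) eqn:E; auto.
      exfalso. apply Bool.andb_true_iff in E. destruct E as [E1 E2]. apply Bool.eqb_prop in E1.
      apply isone_true in E2. apply hh; auto. subst e2. destruct e; simpl; congruence. }
    rewrite et. simpl. rewrite mul1r, hc, mulVl, mue_one, act_one; auto.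
Qed.

Lemma nfd_sig x : nf (fst x) -> nfd (sig x) = x.
Proof.
  destruct x as [w h0]. intro hw. unfold nfd, sig. simpl. rewrite (phi_hom (sigl w)). simpl.
  rewrite phi_i. simpl.
  replace (actX h0 x0) with (exist (fun x => nf (fst x)) ([] : list (H * bool), h0) I)
    by (apply Xt_eq; simpl; rewrite mul1r; auto).
  apply nfd_sig_aux; auto.
Qed.

Lemma i_inj h h' : i h = i h' -> h = h'.
Proof.
  intro e. assert (nfd (sig ([], h)) = nfd (sig ([], h'))) as E.
  { unfold sig; simpl. rewrite e. auto. }
  rewrite !nfd_sig in E; simpl; auto. congruence.
Qed.

Lemma pi_i h : pi (i h) = [].
Proof.
  unfold pi. replace (i h) with (sig ([], h)) by (unfold sig; simpl; apply mul1l).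
  rewrite nfd_sig; simpl; auto.
Qed.

Lemma nfd_mul_i g h : nfd (g ** i h) = (pi g, coord g ** h).
Proof.
  rewrite (g_decomp g) at 1. rewrite <- mulA, <- hiM.
  replace (sigl (pi g) ** i (coord g ** h)) with (sig (pi g, coord g ** h)) by auto.
  apply nfd_sig. apply pi_nf.
Qed.
Lemma pi_mul_i g h : pi (g ** i h) = pi g.
Proof. unfold pi at 1. rewrite nfd_mul_i. auto. Qed.
Lemma coord_mul_i g h : coord (g ** i h) = coord g ** h.
Proof. unfold coord at 1. rewrite nfd_mul_i. auto. Qed.

Lemma same_fiber g g' : pi g = pi g' -> g' = g ** i (ginv (coord g) ** coord g').
Proof.
  intro e. rewrite (g_decomp g'), (g_decomp g) at 1. rewrite e, hiM, hiV. gnorm. auto.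
Qed.

Lemma nfd_t g :
  (exists w' c', pi g = w' ++ [(c', false)] /\ A (coord g) /\ nfd (g ** t) = (w', c' ** mu (coord g))) \/
  (~ (exists w' c', pi g = w' ++ [(c', false)] /\ A (coord g)) /\
   nfd (g ** t) = (pi g ++ [(repe true (coord g), true)], mu (ginv (repe true (coord g)) ** coord g))).
Proof.
  destruct (classic (exists w' c', pi g = w' ++ [(c', false)] /\ A (coord g))) as [[w' [c' [ew ha]]]|hn].
  - left. exists w', c'. repeat split; auto.
    rewrite (g_decomp g) at 1. rewrite ew, sigl_app. simpl.
    replace (sigl w' ** i c' ** ginv t ** i (coord g) ** t) with (sigl w' ** i c' ** (ginv t ** i (coord g) ** t))
      by (gnorm; auto).
    rewrite hrel; auto. rewrite <- mulA, <- hiM.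
    change (sigl w' ** i (c' ** mu (coord g))) with (sig (w', c' ** mu (coord g))).
    apply nfd_sig. simpl. pose proof (pi_nf g) as h. rewrite ew in h. eapply nf_app_inv; eauto.
  - right. split; auto.
    pose (c := repe true (coord g)). pose (a := ginv c ** coord g).
    assert (ha : A a) by apply (resid_in true).
    rewrite (g_decomp g) at 1.
    replace (sigl (pi g) ** i (coord g) ** t) with (sigl (pi g) ** i c ** t ** (ginv t ** i a ** t)).
    2:{ unfold a. rewrite hiM, hiV. gnorm. auto. }
    rewrite hrel; auto.
    change (repe true (coord g)) with c. fold a.
    replace (sigl (pi g) ** i c ** t) with (sigl (pi g ++ [(c, true)])) by (rewrite sigl_app; auto).
    change (sigl (pi g ++ [(c, true)]) ** i (mu a)) with (sig (pi g ++ [(c, true)], mu a)).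
    apply nfd_sig. simpl. apply nf_snoc.
    + apply pi_nf.
    + apply rep_idem, CeS.
    + intros w' c' e' ew hne hc. destruct e'; [congruence|]. apply hn. exists w', c'. split; auto.
      unfold c in hc. apply (rep_one_iff _ (CeS true)) in hc. auto.
Qed.

Lemma pi_t : pi t = [(gone, true)].
Proof.
  replace t with (i gone ** t) by (rewrite hi1; apply mul1l).
  unfold pi. destruct (nfd_t (i gone)) as [[w' [c' [e _]]]|[_ e]].
  - rewrite pi_i in e. destruct w'; simpl in e; discriminate.
  - rewrite e. rewrite pi_i. simpl. unfold coord. 
    replace (i gone) with (sig ([], gone)) by (unfold sig; simpl; rewrite mul1l; auto).
    rewrite nfd_sig; simpl; auto. rewrite repe_one. auto.
Qed.

Lemma t_not_i h : t <> i h.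
Proof. intro e. pose proof pi_t as p. rewrite e, pi_i in p. discriminate. Qed.

Lemma pi_step g s : (s = t \/ exists h, s = i h) -> tstep (pi g) (pi (g ** s)).
Proof.
  intros [->|[h ->]].
  - unfold pi at 2. destruct (nfd_t g) as [[w' [c' [e [_ e2]]]]|[_ e2]]; rewrite e2; simpl.
    + right; right. exists (c', false). auto.
    + right; left. eexists; eauto.
  - left. rewrite pi_mul_i. auto.
Qed.

Lemma E1_gen (S : G -> Prop) (hS : forall s, S s -> s = t \/ exists h, s = i h) :
  forall g g', cay_adj S g g' -> tstep (pi g) (pi g').
Proof.
  intros g g' [h|h].
  - rewrite <- (mulKl' g g'). apply pi_step; auto.
  - apply tstep_sym. rewrite <- (mulKl' g' g). apply pi_step; auto.
Qed.

Definition S1 : G -> Prop := rel_gen_set [t] [image i (fun _ => True)].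

Lemma S1_cases s : S1 s -> s = t \/ exists h, s = i h.
Proof.
  intros [h|[P [hP hs]]].
  - left. destruct h as [h|[]]; auto.
  - right. destruct hP as [hP|[]]. subst P. destruct hs as [h [_ e]]. eauto.
Qed.

Lemma S1_gen : generates S1.
Proof.
  intros g P hP hS. apply gen_G; auto.
  - intro h. apply hS. right. exists (image i (fun _ => True)). split; [left; auto|]. exists h; auto.
  - apply hS. left. left. auto.
Qed.

Lemma part1 : weakly_rel_hyperbolic [image i (fun _ => True)].
Proof.
  exists [t]. split; [apply S1_gen|].
  apply (hyp_part1 S1 (gone, true) pi).
  - apply E1_gen, S1_cases.
  - intros g g' e. apply dist_le_adj. left. rewrite (same_fiber g g' e). rewrite mulKl.
    right. exists (image i (fun _ => True)). split; [left; auto|]. eexists; eauto.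
Qed.

Section Part2.
Context (Y : list H).
Definition SH : H -> Prop := rel_gen_set Y [A; B].
Definition Sp : G -> Prop := rel_gen_set (t :: map i Y) [image i A; image i B].
Definition Sg : G -> Prop := rel_gen_set (t :: map i Y) [image i A].

Lemma Sp_cases s : Sp s -> s = t \/ exists h, s = i h /\ SH h.
Proof.
  intros [hs|[P [hP hs]]].
  - destruct hs as [->|hs]; [left; auto|]. right. apply in_map_iff in hs. destruct hs as [y [<- hy]].
    exists y. split; auto. left; auto.
  - right. destruct hP as [<-|[<-|[]]]; destruct hs as [h [hh <-]]; exists h; split; auto;
      right; [exists A|exists B]; split; simpl; auto.
Qed.

Lemma Sp_of_SH h : SH h -> Sp (i h).
Proof.
  intros [hy|[P [hP hp]]].
  - left. right. apply in_map; auto.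
  - right. destruct hP as [<-|[<-|[]]].
    + exists (image i A). split; [left; auto|]. exists h; auto.
    + exists (image i B). split; [right; left; auto|]. exists h; auto.
Qed.

Lemma Sp_iA d : A d -> Sp (i d).
Proof. intro h. right. exists (image i A). split; [left; auto|]. exists d; auto. Qed.
Lemma Sp_iB d : B d -> Sp (i d).
Proof. intro h. right. exists (image i B). split; [right; left; auto|]. exists d; auto. Qed.

Lemma Sp_E1 g g' : cay_adj Sp g g' -> tstep (pi g) (pi g').
Proof.
  apply E1_gen. intros s hs. destruct (Sp_cases s hs) as [->|[h [-> _]]]; eauto.
Qed.

Lemma len_snoc_neq {T : Type} (r : list T) x : r <> r ++ [x].
Proof. intro e. apply (f_equal (@length T)) in e. rewrite length_app in e. simpl in e. lia. Qed.

Lemma cross g g' r x : cay_adj Sp g g' -> pi g = r -> pi g' = r ++ [x] ->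
  (snd x = true /\ g' = g ** t /\ repe true (coord g) = fst x) \/
  (snd x = false /\ g = g' ** t /\ A (coord g')).
Proof.
  intros hadj e1 e2.
  assert (Hi : forall u v h, v = u ** i h -> pi u = pi v) by (intros u v h ->; rewrite pi_mul_i; auto).
  destruct hadj as [h|h]; destruct (Sp_cases _ h) as [et|[hh [et _]]].
  - assert (eg : g' = g ** t) by (rewrite <- et, mulKl'; auto).
    destruct (nfd_t g) as [[w' [c' [ew [_ en]]]]|[_ en]].
    + exfalso. assert (HQ : pi g' = w') by (unfold pi; rewrite eg, en; auto).
      rewrite e1 in ew. rewrite e2 in HQ. rewrite <- HQ in ew.
      apply (f_equal (@length _)) in ew. rewrite !length_app in ew. simpl in ew. lia.
    + left. assert (HQ : pi g' = pi g ++ [(repe true (coord g), true)]) by (unfold pi at 1; rewrite eg, en; auto).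
      rewrite e1, e2 in HQ. apply app_inv_head in HQ. injection HQ as ->. simpl. auto.
  - exfalso. assert (HQ : pi g = pi g') by (apply (Hi g g' hh); rewrite <- et, mulKl'; auto).
    rewrite e1, e2 in HQ. apply (len_snoc_neq r x); auto.
  - assert (eg : g = g' ** t) by (rewrite <- et, mulKl'; auto).
    destruct (nfd_t g') as [[w' [c' [ew [ha en]]]]|[_ en]].
    + right. assert (HQ : pi g = w') by (unfold pi; rewrite eg, en; auto).
      rewrite e2 in ew. rewrite e1 in HQ. rewrite <- HQ in ew. apply app_inv_head in ew. injection ew as ->. simpl. auto.
    + exfalso. assert (HQ : pi g = pi g' ++ [(repe true (coord g'), true)]) by (unfold pi at 1; rewrite eg, en; auto).
      rewrite e1, e2 in HQ. apply (f_equal (@length _)) in HQ. rewrite !length_app in HQ. simpl in HQ. lia.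
  - exfalso. assert (HQ : pi g' = pi g) by (apply (Hi g' g hh); rewrite <- et, mulKl'; auto).
    rewrite e1, e2 in HQ. apply (len_snoc_neq r x); auto.
Qed.

Lemma adj_iA g d : A d -> cay_adj Sp g (g ** i d).
Proof. intro h. left. rewrite mulKl. apply Sp_iA; auto. Qed.
Lemma adj_conj g d : A d -> cay_adj Sp (g ** t) (g ** i d ** t).
Proof.
  intro h. left. replace (ginv (g ** t) ** (g ** i d ** t)) with (ginv t ** i d ** t) by (gnorm; auto).
  rewrite hrel; auto. apply Sp_iB. apply mu_in; auto.
Qed.

Lemma Sp_E2 g1 g1' g2 g2' r x : cay_adj Sp g1 g1' -> cay_adj Sp g2 g2' ->
  pi g1 = r -> pi g2 = r -> pi g1' = r ++ [x] -> pi g2' = r ++ [x] ->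
  dist_le Sp 1 g1 g2 /\ dist_le Sp 1 g1' g2'.
Proof.
  intros a1 a2 e1 e2 e1' e2'.
  destruct (cross _ _ _ _ a1 e1 e1') as [[b1 [f1 r1]]|[b1 [f1 r1]]];
  destruct (cross _ _ _ _ a2 e2 e2') as [[b2 [f2 r2]]|[b2 [f2 r2]]]; try congruence.
  - set (dd := ginv (coord g1) ** coord g2).
    assert (hd : A dd) by (apply (rep_eq_coset _ (CeS true)); unfold repe in *; simpl in *; congruence).
    assert (eg : g2 = g1 ** i dd) by (apply same_fiber; congruence).
    split; apply dist_le_adj.
    + rewrite eg. apply adj_iA; auto.
    + rewrite f1, f2, eg. apply adj_conj; auto.
  - set (dd := ginv (coord g1') ** coord g2').
    assert (hd : A dd) by (apply subgroupVM; auto).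
    assert (eg : g2' = g1' ** i dd) by (apply same_fiber; congruence).
    split; apply dist_le_adj.
    + rewrite f1, f2, eg. apply adj_conj; auto.
    + rewrite eg. apply adj_iA; auto.
Qed.

Lemma walk_map m h1 h2 g0 : walk SH m h1 h2 -> walk Sp m (g0 ** i h1) (g0 ** i h2).
Proof.
  intros [p [p0 [p1 hp]]]. exists (fun j => g0 ** i (p j)). repeat split; try congruence.
  intros k hk. destruct (hp k hk) as [e|e]; [left|right];
    rewrite invM, <- mulA, (mulA (ginv g0)), mulVl, mul1l, <- hiV, <- hiM; apply Sp_of_SH; auto.
Qed.

Lemma Sp_F2a g g' k : pi g = pi g' -> dist_le SH k (coord g) (coord g') -> dist_le Sp k g g'.
Proof.
  intros e [m [hm wm]]. exists m. split; auto.
  rewrite (g_decomp g), (g_decomp g'), <- e. apply walk_map; auto.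
Qed.

Lemma Sp_F2b g g' : pi g = pi g' -> cay_adj Sp g g' -> cay_adj SH (coord g) (coord g').
Proof.
  intros e hadj. pose proof (same_fiber g g' e) as eg.
  set (dd := ginv (coord g) ** coord g') in eg.
  destruct hadj as [h|h].
  - rewrite eg, mulKl in h. destruct (Sp_cases _ h) as [et|[hh [et hs]]].
    + exfalso. apply (t_not_i dd). auto.
    + left. apply i_inj in et. fold dd. rewrite et. auto.
  - rewrite eg, invM, mulKr', <- hiV in h. destruct (Sp_cases _ h) as [et|[hh [et hs]]].
    + exfalso. apply (t_not_i (ginv dd)). auto.
    + right. apply i_inj in et. replace (ginv (coord g') ** coord g) with (ginv dd) by (unfold dd; gnorm; auto).
      rewrite et. auto.
Qed.

Lemma Sg_Sp s : Sg s -> Sp s.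
Proof.
  intros [h|[P [hP hs]]]; [left; auto|]. right. exists P. split; auto.
  destruct hP as [<-|[]]. left; auto.
Qed.

Lemma Sp_lip s : Sp s -> dist_le Sg 3 gone s.
Proof.
  intro hs. destruct hs as [hs|[P [hP hp]]].
  - apply (dist_le_mono _ 1); [lia|]. apply dist_le_adj. left. rewrite inv1, mul1l. left. auto.
  - destruct hP as [<-|[<-|[]]].
    + apply (dist_le_mono _ 1); [lia|]. apply dist_le_adj. left. rewrite inv1, mul1l. right.
      exists (image i A). split; [left; auto|auto].
    + destruct hp as [b [hb <-]]. destruct (muinv_spec b hb) as [ha hm].
      rewrite <- hm, <- hrel; auto.
      assert (a1 : cay_adj Sg gone (ginv t)) by (right; rewrite invK, mul1r; left; left; auto).
      assert (a2 : cay_adj Sg (ginv t) (ginv t ** i (muinv b))).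
      { left. rewrite mulKl. right. exists (image i A). split; [left; auto|]. exists (muinv b); auto. }
      assert (a3 : cay_adj Sg (ginv t ** i (muinv b)) (ginv t ** i (muinv b) ** t)).
      { left. rewrite mulKl. left; left; auto. }
      replace 3 with (1 + 1 + 1) by lia.
      eapply dist_le_trans; [eapply dist_le_trans|]; apply dist_le_adj; eauto.
Qed.

Lemma Sg_gen : generates SH -> generates Sg.
Proof.
  intros hY g P hP hS. apply gen_G; auto.
  - intro h. apply (hY h (fun h => P (i h))).
    + split; [|split].
      * rewrite hi1. apply subgroup1; auto.
      * intros x y hx hy. rewrite hiM. apply subgroupM; auto.
      * intros x hx. rewrite hiV. apply subgroupV; auto.
    + intros s [hs|[Q [hQ hq]]].
      * apply hS. left. right. apply in_map; auto.
      * destruct hQ as [<-|[<-|[]]].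
        -- apply hS. right. exists (image i A). split; [left; auto|]. exists s; auto.
        -- destruct (muinv_spec s hq) as [ha hm]. rewrite <- hm, <- hrel; auto.
           assert (Pt : P t) by (apply hS; left; left; auto).
           apply subgroupM; auto. apply subgroupM; auto.
           ++ apply subgroupV; auto.
           ++ apply hS. right. exists (image i A). split; [left; auto|]. exists (muinv s); auto.
  - apply hS. left. left. auto.
Qed.

Lemma part2_Y : generates SH -> cayley_hyperbolic SH -> weakly_rel_hyperbolic [image i A].
Proof.
  intros hgen hhyp. exists (t :: map i Y).
  assert (gS : generates Sg) by (apply Sg_gen; auto).
  split; [exact gS|].
  destruct (hyp_thin _ hhyp) as [dH hdH].
  assert (connH := connected_of_generates SH hgen).
  assert (gSp : generates Sp).
  { intros g P hP hS. apply gS; auto. intros s hs. apply hS, Sg_Sp; auto. }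
  assert (connSp := connected_of_generates Sp gSp).
  pose proof (hyp_part2 Sp (gone, true) pi Sp_E1 Sp_E2 SH coord dH hdH connH Sp_F2a Sp_F2b) as T.
  apply (transfer Sg Sp Sg_Sp) with (d2 := 5 * dH + 2); auto.
  intros x y m w. apply (dist_lip Sg Sp 3 Sp_lip); auto.
Qed.
End Part2.

Lemma part2 : weakly_rel_hyperbolic [A; B] -> weakly_rel_hyperbolic [image i A].
Proof. intros [Y [hg hh]]. apply (part2_Y Y); auto. Qed.
End NF.


Theorem theorem1p1 (H : group) (A B : H -> Prop) (mu : H -> H)
  (hA : is_subgroup A) (hB : is_subgroup B) (hmu : is_iso_between A B mu)
  (G : group) (i : H -> G) (t : G) (hG : is_HNN_extension A mu i t) :
  weakly_rel_hyperbolic [image i (fun _ => True)] /\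
  (weakly_rel_hyperbolic [A; B] -> weakly_rel_hyperbolic [image i A]).
Proof.
  split.
  - exact (part1 A B mu hA hB hmu i t hG).
  - exact (part2 A B mu hA hB hmu i t hG).
Qed.
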